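(* For every $A\in\mathcal A$, the predominated graph $(A,V(A)\setminus X(A))$ is an atomic MBD critical graph.
   Context: For a tree $T$, $S(T)$ is obtained by subdividing each edge of $T$ exactly once; $\mathcal S=\{S(T):T\text{ a tree}\}$ and $X(S(T))=V(T)$ (with $S(P_1)=P_1$, $X(P_1)=V(P_1)$). For an integer $k\ge 2$, the $k$-odd replacement of an edge $xy$ of a graph removes $xy$ and adds $k$ internally vertex-disjoint $x,y$-paths of arbitrary odd lengths. $\mathcal A$ is the smallest family of graphs such that (i) $\mathcal S\subseteq\mathcal A$ (with the given $X$), and (ii) if $A\in\mathcal A$ and $A'$ is obtained from $A$ by a $k$-odd replacement ($k\ge2$) of an edge of $A$, then $A'\in\mathcal A$, with $X(A')$ the bipartition class of the bipartite graph $A'$ containing $X(A)$. A predominated graph is a pair $(G,D)$ with $D\subseteq V(G)$; in the MBD game on $(G,D)$, Staller and Dominator alternately claim unclaimed vertices of $V(G)$ (including those of $D$), Staller first; Staller wins if she claims all of $N_G[v]$ for some $v\in V(G)\setminus D$, Dominator wins otherwise. $(G,D)$ is MBD critical if Staller wins on $(G,D)$ but Dominator wins on $(G,D\cup\{v\})$ for every $v\in V(G)\setminus D$; it is atomic MBD critical if additionally $D$ is independent in $G$ and no vertex of $D$ is isolated in $G$. *)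

(* Defs.v *)
(* Graphs are labelled on natural numbers:
   a graph is a finite vertex list V : seq nat together with an adjacency
   relation a : nat -> nat -> Prop (only relating vertices of V). *)
From mathcomp Require Import all_boot.
Set Implicit Arguments. Unset Strict Implicit. Unset Printing Implicit Defensive.

Fixpoint walk (r : nat -> nat -> Prop) (x : nat) (p : seq nat) : Prop :=
  match p with
  | [::] => True
  | y :: q => r x y /\ walk r y q
  end.

Definition is_tree (U : seq nat) (t : nat -> nat -> Prop) : Prop :=
  [/\ (exists x, x \in U),
      (forall x y, t x y -> [/\ x \in U, y \in U, x <> y & t y x]),
      (forall x y, x \in U -> y \in U -> exists p, walk t x p /\ last x p = y)
    & (forall x p, uniq (x :: p) -> 2 <= size p -> walk t x p -> ~ t (last x p) x)].

Definition consec (s : seq nat) (u v : nat) : Prop :=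
  exists i, i.+1 < size s /\ nth 0 s i = u /\ nth 0 s i.+1 = v.

(* The family \mathcal A, as triples (V(A), adjacency of A, X(A)).
   Constructor inA_sub: A = S(T) for a tree (U,t), the subdivision vertex of
   edge xy being labelled m x y (fresh, injective on edges); X = V(T).
   Constructor inA_rep: k-odd replacement (k = size P >= 2) of the edge xy of
   A; the j-th new x,y-path is x :: q_j ++ [:: y] where q_j is the j-th list
   of P (even number of fresh internal vertices, so odd length); X' is the
   bipartition class of A' containing X. *)
Inductive inA : seq nat -> (nat -> nat -> Prop) -> seq nat -> Prop :=
| inA_sub (U : seq nat) (t : nat -> nat -> Prop) (m : nat -> nat -> nat)
    (V : seq nat) (a : nat -> nat -> Prop) (X : seq nat) :
    is_tree U t ->
    (forall x y, t x y -> m x y = m y x) ->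
    (forall x y, t x y -> m x y \notin U) ->
    (forall x y x' y', t x y -> t x' y' -> m x y = m x' y' ->
        (x = x' /\ y = y') \/ (x = y' /\ y = x')) ->
    (forall v, v \in V <-> v \in U \/ exists x y, t x y /\ v = m x y) ->
    (forall u v, a u v <-> exists x y, t x y /\
        ((u = x /\ v = m x y) \/ (u = m x y /\ v = x))) ->
    (forall v, v \in X <-> v \in U) ->
    inA V a X
| inA_rep (V : seq nat) (a : nat -> nat -> Prop) (X : seq nat) (x y : nat)
    (P : seq (seq nat)) (V' : seq nat) (a' : nat -> nat -> Prop) (X' : seq nat) :
    inA V a X ->
    a x y ->
    2 <= size P ->
    (forall q, q \in P -> ~~ odd (size q)) ->
    uniq (flatten P) ->
    (forall v, v \in flatten P -> v \notin V) ->
    count (fun q : seq nat => nilp q) P <= 1 ->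
    (forall v, v \in V' <-> v \in V \/ v \in flatten P) ->
    (forall u v, a' u v <->
       (a u v /\ ~ ((u = x /\ v = y) \/ (u = y /\ v = x))) \/
       exists q, q \in P /\
         (consec (x :: q ++ [:: y]) u v \/ consec (x :: q ++ [:: y]) v u)) ->
    {subset X <= X'} ->
    {subset X' <= V'} ->
    (forall u v, a' u v -> (u \in X' <-> v \notin X')) ->
    inA V' a' X'.

(* Maker-Breaker domination game on the predominated graph ((V,a), D).
   staller_wins V a D S Dm : Staller (to move) can force a win from the
   position where S are Staller's and Dm Dominator's claimed vertices. *)
Definition nbhd_claimed (a : nat -> nat -> Prop) (S : seq nat) (u : nat) : Prop :=
  forall w, (w = u \/ a u w) -> w \in S.

Inductive staller_wins (V : seq nat) (a : nat -> nat -> Prop) (D : seq nat) :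
    seq nat -> seq nat -> Prop :=
| SW_step (S Dm : seq nat) (v : nat) :
    v \in V -> v \notin S -> v \notin Dm ->
    ((exists u, [/\ u \in V, u \notin D & nbhd_claimed a (v :: S) u]) \/
     ((exists w, [/\ w \in V, w \notin v :: S & w \notin Dm]) /\
      (forall w, w \in V -> w \notin v :: S -> w \notin Dm ->
         staller_wins V a D (v :: S) (w :: Dm)))) ->
    staller_wins V a D S Dm.

(* Staller wins on (G, D) (Staller moves first); otherwise Dominator wins. *)
Definition staller_wins_game V a D : Prop := staller_wins V a D [::] [::].

Definition MBD_critical V a D : Prop :=
  staller_wins_game V a D /\
  forall v, v \in V -> v \notin D -> ~ staller_wins_game V a (v :: D).

Definition atomic_MBD_critical V a D : Prop :=
  [/\ MBD_critical V a D,
      (forall u v, u \in D -> v \in D -> ~ a u v)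
    & (forall u, u \in D -> exists w, a u w)].

(* Main.v *)
Require Import Defs.
From mathcomp Require Import all_boot zify.
From Stdlib Require Import Classical ClassicalEpsilon.
Set Implicit Arguments. Unset Strict Implicit. Unset Printing Implicit Defensive.


Section SWind.
Variables (V : seq nat) (a : nat -> nat -> Prop) (D : seq nat).
Variable P : seq nat -> seq nat -> Prop.
Hypothesis step : forall S M v, v \in V -> v \notin S -> v \notin M ->
  ((exists u, [/\ u \in V, u \notin D & nbhd_claimed a (v :: S) u]) \/
   ((exists w, [/\ w \in V, w \notin v :: S & w \notin M]) /\
    (forall w, w \in V -> w \notin v :: S -> w \notin M ->
       P (v :: S) (w :: M)))) -> P S M.

Fixpoint sw_ind2 S M (H : staller_wins V a D S M) {struct H} : P S M :=
  match H with
  | SW_step S0 M0 v h1 h2 h3 hor =>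
    step h1 h2 h3
      (match hor with
       | or_introl h => or_introl h
       | or_intror (conj hex hall) =>
           or_intror (conj hex (fun w x y z => sw_ind2 (hall w x y z)))
       end)
  end.
End SWind.

Lemma sw_eqi V a D S M S2 M2 : staller_wins V a D S M -> S =i S2 -> M =i M2 ->
  staller_wins V a D S2 M2.
Proof.
move=> H; elim/sw_ind2: H S2 M2 => {S M} S M v Hv HvS HvM IH S2 M2 ES EM.
apply: (@SW_step _ _ _ _ _ v) => //; first by rewrite -ES.
  by rewrite -EM.
case: IH => [[u [Hu HuD Hn]]|[[w [Hw HwS HwM]] Hall]].
  left; exists u; split=> // z Hz; have := Hn z Hz; by rewrite !inE ES.
right; split.
  exists w; split=> //.
    by move: HwS; rewrite !inE ES.
  by rewrite -EM.
move=> w' Hw' HwS' HwM'; apply: (Hall w') => //.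
- by move: HwS'; rewrite !inE ES.
- by rewrite EM.
- by move=> z; rewrite !inE ES.
- by move=> z; rewrite !inE EM.
Qed.

Lemma pairing_dom V a D (pr : nat -> nat -> Prop) :
  (forall p q, pr p q -> pr q p) ->
  (forall p q q', pr p q -> pr p q' -> q = q') ->
  (forall p q, pr p q -> p <> q /\ q \in V) ->
  (forall u, u \in V -> u \notin D ->
     exists p q, [/\ pr p q, p = u \/ a u p & q = u \/ a u q]) ->
  ~ staller_wins V a D [::] [::].
Proof.
move=> Hsym Hfun Hirr Hcov.
pose Inv (S M : seq nat) := forall p q, pr p q ->
  [/\ p \notin S, q \notin S, p \notin M & q \notin M] \/
  (p \in M /\ p \notin S) \/ (q \in M /\ q \notin S).
suff: forall S M, staller_wins V a D S M -> Inv S M -> False.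
  by move=> H Hw; apply: (H _ _ Hw) => p q _; left.
move=> S M H; elim/sw_ind2: H => {S M} S M v Hv HvS HvM Hor HI.
case: Hor => [[u [Hu HuD Hn]]|[Hex Hall]].
  have [p [q [Hpq Hp Hq]]] := Hcov u Hu HuD.
  have := Hn p Hp; have := Hn q Hq; rewrite !inE.
  case: (HI p q Hpq) => [[/negbTE-> /negbTE-> _ _]|[[HpM /negbTE->]|[HqM /negbTE->]]].
  - rewrite !orbF => /eqP Hqv /eqP Hpv.
    by case: (Hirr _ _ Hpq) => H _; apply: H; rewrite Hpv Hqv.
  - by rewrite orbF => _ /eqP Hpv; move: HvM; rewrite -Hpv HpM.
  - by rewrite orbF => /eqP Hqv; move: HvM; rewrite -Hqv HqM.
case: (classic (exists q, pr v q /\ q \notin S /\ q \notin M)).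
  move=> [q [Hvq [HqS HqM]]].
  have Hqv : q <> v by case: (Hirr _ _ Hvq) => H _ E; apply: H.
  have HqV : q \in V by case: (Hirr _ _ Hvq).
  apply: (Hall q HqV _ HqM).
    by rewrite inE negb_or HqS andbT; apply/eqP.
  move=> p r Hpr.
  case: (classic (p = v \/ r = v)) => Hpv.
    have Hpr' : (p = v /\ r = q) \/ (r = v /\ p = q).
      case: Hpv => E; subst.
        by left; split=> //; apply: Hfun Hpr Hvq.
      by right; split=> //; apply: Hfun (Hsym _ _ Hpr) Hvq.
    case: Hpr' => [[-> ->]|[-> ->]].
      by right; right; rewrite inE eqxx; split=> //;
         rewrite inE negb_or HqS andbT; apply/eqP.
    by right; left; rewrite inE eqxx; split=> //;
       rewrite inE negb_or HqS andbT; apply/eqP.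
  have [Hpv1 Hrv1] : p <> v /\ r <> v by split=> E; apply: Hpv; tauto.
  have Hpq : p <> q.
    move=> E; subst p; apply: Hrv1; apply: Hfun (Hsym _ _ Hvq); exact: Hpr.
  have Hrq : r <> q.
    move=> E; subst r; apply: Hpv1; apply: Hfun (Hsym _ _ Hvq); exact: Hsym.
  have E1 : (p \in v :: S) = (p \in S) by rewrite inE (negbTE (introN eqP Hpv1)).
  have E2 : (r \in v :: S) = (r \in S) by rewrite inE (negbTE (introN eqP Hrv1)).
  have E3 : (p \in q :: M) = (p \in M) by rewrite inE (negbTE (introN eqP Hpq)).
  have E4 : (r \in q :: M) = (r \in M) by rewrite inE (negbTE (introN eqP Hrq)).
  by rewrite E1 E2 E3 E4; apply: HI.
move=> Hno.
have [w [Hw HwS HwM]] := Hex.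
apply: (Hall w Hw HwS HwM) => p r Hpr.
have Hnf : forall z, pr v z -> z \in S \/ z \in M.
  move=> z Hz; case: (boolP (z \in S)) => HzS; first by left.
  case: (boolP (z \in M)) => HzM; first by right.
  by case: Hno; exists z.
case: (HI p r Hpr) => [[HpS HrS HpM HrM]|[[HpM HpS]|[HrM HrS]]].
- case: (eqVneq p v) => [Epv|Hpv].
    by subst p; case: (Hnf r Hpr) => H; [move: HrS|move: HrM]; rewrite H.
  case: (eqVneq r v) => [Erv|Hrv].
    by subst r; case: (Hnf p (Hsym _ _ Hpr)) => H; [move: HpS|move: HpM]; rewrite H.
  case: (eqVneq p w) => [Epw|Hpw].
    by right; left; rewrite !inE Epw eqxx /=; split=> //; rewrite -Epw negb_or Hpv HpS.
  case: (eqVneq r w) => [Erw|Hrw].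
    by right; right; rewrite !inE Erw eqxx /=; split=> //; rewrite -Erw negb_or Hrv HrS.
  by left; rewrite !inE !negb_or Hpv HpS Hrv HrS Hpw HpM Hrw HrM.
- right; left; rewrite !inE HpM orbT; split=> //.
  rewrite negb_or HpS andbT; apply/eqP=> E; move: HvM; by rewrite -E HpM.
- right; right; rewrite !inE HrM orbT; split=> //.
  rewrite negb_or HrS andbT; apply/eqP=> E; move: HvM; by rewrite -E HrM.
Qed.

Lemma nth_notin_take (s : seq nat) k : uniq s -> k < size s ->
  nth 0 s k \notin take k s.
Proof.
move=> Hu Hk; move: Hu; rewrite -{1}(cat_take_drop k s) (drop_nth 0 Hk).
rewrite cat_uniq => /and3P [_ /hasPn H _]; apply: H; exact: mem_head.
Qed.

Lemma peeling V a D (us ds : seq nat) r :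
  size ds = size us -> uniq (r :: us ++ ds) ->
  {subset us <= V} -> {subset ds <= V} -> r \in V ->
  (forall u, u \in r :: us -> u \notin D) ->
  (forall i w, i < size us -> a (nth 0 us i) w -> w \in take i.+1 ds) ->
  (forall w, a r w -> w \in ds) ->
  staller_wins V a D [::] [::].
Proof.
move=> Hsz /= /andP [Hr Hu] HusV HdsV HrV HD Hnb Hrnb.
move: Hr; rewrite mem_cat negb_or => /andP [Hrus Hrds].
move: Hu; rewrite cat_uniq => /and3P [Huus /hasPn Hdis Huds].
have Hdu : forall z, z \in ds -> z \notin us.
  move=> z Hz; apply/negP => Hz'; move: (Hdis z Hz); by rewrite Hz'.
suff H : forall n k S M, k + n = size us -> S =i take k ds -> M =i take k us ->
    staller_wins V a D S M.
  by apply: (H (size us) 0) => //; rewrite take0.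
elim=> [|n IH] k S M Hkn ES EM.
  rewrite addn0 in Hkn; subst k.
  apply: (@SW_step _ _ _ _ _ r) => //.
  - by rewrite ES; apply/negP => /mem_take; rewrite (negbTE Hrds).
  - by rewrite EM; apply/negP => /mem_take; rewrite (negbTE Hrus).
  left; exists r; split=> //; first by apply: HD; rewrite mem_head.
  move=> z [->|Hz]; first by rewrite mem_head.
  by rewrite inE ES -Hsz take_size Hrnb // orbT.
have Hk : k < size us by rewrite -Hkn; lia.
have Hk' : k < size ds by rewrite Hsz.
set d := nth 0 ds k; set u := nth 0 us k.
have HdS : d \notin S by rewrite ES; apply: nth_notin_take.
have HuM : u \notin M by rewrite EM; apply: nth_notin_take.
have Hdds : d \in ds by apply: mem_nth.
have Huin : u \in us by apply: mem_nth.
have HdM : d \notin M by rewrite EM; apply/negP => /mem_take; rewrite (negbTE (Hdu _ Hdds)).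
have Hud : u <> d by move=> E; move: (Hdu _ Hdds); rewrite -E Huin.
have HuS : u \notin d :: S.
  rewrite inE negb_or ES; apply/andP; split; first by apply/eqP.
  apply/negP => /mem_take Hin; move: (Hdu _ Hin); by rewrite Huin.
apply: (@SW_step _ _ _ _ _ d) => //; first by apply: HdsV.
right; split; first by exists u; split=> //; apply: HusV.
move=> w Hw HwS HwM.
case: (eqVneq w u) => [->|Hwu].
  apply: (IH k.+1); first by rewrite addSnnS.
    by move=> z; rewrite (take_nth 0 Hk') mem_rcons !inE ES.
  by move=> z; rewrite (take_nth 0 Hk) mem_rcons !inE EM.
apply: (@SW_step _ _ _ _ _ u) => //; first by apply: HusV.
  by rewrite inE negb_or HuM andbT eq_sym.
left; exists u; split; first by apply: HusV.
  by apply: HD; rewrite inE Huin orbT.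
move=> z [->|Hz]; first by rewrite mem_head.
have := Hnb k z Hk Hz; rewrite (take_nth 0 Hk') mem_rcons !inE => /orP [->|Hz']; first by rewrite orbT.
by rewrite ES Hz' !orbT.
Qed.


Lemma min_ex (P : nat -> Prop) : (exists n, P n) ->
  exists n, P n /\ forall m, P m -> n <= m.
Proof.
move=> [n0 Hn0].
suff H : forall N n, n <= N -> P n -> exists n0, P n0 /\ (forall m, P m -> n0 <= m).
  exact: (H n0 n0).
elim=> [|N IH] n Hn Pn.
  by exists n; split=> // m _; move: Hn; rewrite leqn0 => /eqP ->.
case: (classic (exists m, m < n /\ P m)) => [[m [Hm Pm]]|Hno].
  by apply: (IH m) => //; lia.
exists n; split=> // m Pm; rewrite leqNgt; apply/negP => H; apply: Hno; by exists m.
Qed.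

Section Walks.
Variable t : nat -> nat -> Prop.

Lemma walk_cat x (p q : seq nat) : walk t x (p ++ q) <-> walk t x p /\ walk t (last x p) q.
Proof.
elim: p x => [|y p IH] x /=; first by split=> // [[]].
rewrite IH; tauto.
Qed.

Lemma walk_take x (p : seq nat) n : walk t x p -> walk t x (take n p).
Proof. by rewrite -{1}(cat_take_drop n p) walk_cat; case. Qed.

Lemma last_rev_belast (y : nat) (p : seq nat) : last (last y p) (rev (belast y p)) = y.
Proof.
case: p => [|z p] //=; by rewrite rev_cons last_rcons.
Qed.

Hypothesis tsym : forall x y, t x y -> t y x.

Lemma walk_rev x (p : seq nat) : walk t x p -> walk t (last x p) (rev (belast x p)).
Proof.
elim: p x => [|y p IH] x //= [Hxy Hw].
rewrite rev_cons -cats1 walk_cat; split; first exact: IH.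
by rewrite last_rev_belast /=; split=> //; apply: tsym.
Qed.

Lemma last_take (x : nat) (s : seq nat) i : i <= size s -> last x (take i s) = nth x (x :: s) i.
Proof.
elim: s x i => [|y s IH] x [|i] //= Hi.
rewrite IH; last lia.
by apply: set_nth_default => /=; lia.
Qed.

Lemma belast_take (x : nat) (s : seq nat) i : i <= size s -> belast x (take i s) = take i (x :: s).
Proof.
elim: s x i => [|y s IH] x [|i] //= Hi.
by rewrite IH; last lia.
Qed.
End Walks.

Section Tree.
Variables (U : seq nat) (t : nat -> nat -> Prop) (r : nat).
Hypothesis Ht : is_tree U t.
Hypothesis Hr : r \in U.

Lemma t_in x y : t x y -> x \in U /\ y \in U.
Proof. by case: Ht => _ H _ _ /H []. Qed.
Lemma t_sym x y : t x y -> t y x.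
Proof. by case: Ht => _ H _ _ /H []. Qed.
Lemma t_neq x y : t x y -> x <> y.
Proof. by case: Ht => _ H _ _ /H []. Qed.

Definition W x n := exists p, [/\ walk t x p, last x p = r & size p = n].

Definition dist x := epsilon (inhabits 0) (fun n => W x n /\ forall m, W x m -> n <= m).

Lemma distP x : x \in U -> W x (dist x) /\ forall m, W x m -> dist x <= m.
Proof.
move=> Hx; rewrite /dist.
apply: (epsilon_spec (inhabits 0) (fun n => W x n /\ forall m, W x m -> n <= m)).
apply: min_ex.
case: Ht => _ _ Hc _; have [p [Hw Hl]] := Hc x r Hx Hr.
by exists (size p), p.
Qed.

Lemma dist_r : dist r = 0.
Proof.
have [_ H] := distP Hr; apply/eqP; rewrite -leqn0; apply: H; by exists [::].
Qed.

Lemma dist0 x : x \in U -> dist x = 0 -> x = r.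
Proof.
move=> Hx H0; have [[p [_ Hl Hs]] _] := distP Hx.
by move: Hs Hl; rewrite H0; case: p.
Qed.

Lemma dist_edge x y : t x y -> dist x <= (dist y).+1.
Proof.
move=> Hxy; have [Hx Hy] := t_in Hxy.
have [[p [Hw Hl Hs]] _] := distP Hy; have [_ H] := distP Hx.
apply: H; exists (y :: p); split=> //=; by rewrite Hs.
Qed.

Definition parent x := epsilon (inhabits 0) (fun y => t x y /\ (dist y).+1 = dist x).

Lemma parentP x : x \in U -> x != r -> t x (parent x) /\ (dist (parent x)).+1 = dist x.
Proof.
move=> Hx Hxr; rewrite /parent.
apply: (epsilon_spec (inhabits 0) (fun y => t x y /\ (dist y).+1 = dist x)).
have [[p [Hw Hl Hs]] _] := distP Hx.
case: p Hw Hl Hs => [|y p] /=; first by move=> _ Hl; move: Hxr; rewrite Hl eqxx.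
move=> [Hxy Hw] Hl Hs; exists y; split=> //.
have [Hxu Hyu] := t_in Hxy.
have [_ H] := distP Hyu; have H1 : dist y <= size p by apply: H; exists p.
have := dist_edge Hxy; lia.
Qed.

Fixpoint chp n x := if n is n'.+1 then parent x :: chp n' (parent x) else [::].

Lemma chp_props n : forall x, x \in U -> dist x = n ->
  [/\ walk t x (chp n x), last x (chp n x) = r, size (chp n x) = n,
      uniq (x :: chp n x) & forall z, z \in chp n x -> z \in U /\ dist z < n].
Proof.
elim: n => [|n IH] x Hx Hd.
  by rewrite (dist0 Hx Hd).
have Hxr : x != r by apply/eqP => E; move: Hd; rewrite E dist_r.
have [Hxy Hdy] := parentP Hx Hxr.
set y := parent x in Hxy Hdy *.
have [_ Hy] := t_in Hxy.
have [Hw Hl Hs Hu Hz] := IH y Hy ltac:(lia).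
split=> //=; first by rewrite Hs.
  apply/andP; split; last exact: Hu.
  rewrite inE negb_or; apply/andP; split.
    by apply/eqP => E; move: Hdy; rewrite /y -E; lia.
  by apply/negP => /Hz [_]; lia.
move=> z; rewrite inE => /orP [/eqP ->|/Hz [? ?]]; split=> //; rewrite /y in Hdy Hy; lia.
Qed.

Lemma tree_edge u w : t u w -> (u != r /\ parent u = w) \/ (w != r /\ parent w = u).
Proof.
move=> Huw; apply: NNPP => Hno.
have H1 : ~ (u != r /\ parent u = w) by tauto.
have H2 : ~ (w != r /\ parent w = u) by tauto.
have [Hu Hw] := t_in Huw.
have [Aw Al As Au Az] := chp_props Hu (erefl _).
have [Bw Bl Bs Bu Bz] := chp_props Hw (erefl _).
set A' := chp (dist u) u in Aw Al As Au Az.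
set B' := chp (dist w) w in Bw Bl Bs Bu Bz.
have HrA : r \in u :: A' by rewrite -Al mem_last.
have HrB : r \in w :: B' by rewrite -Bl mem_last.
have Hhas : has (mem (u :: A')) (w :: B') by apply/hasP; exists r.
set i := find (mem (u :: A')) (w :: B').
have Hi : i < size (w :: B') by rewrite -has_find.
set z := nth 0 (w :: B') i.
have HzA : z \in u :: A' by exact: (nth_find 0 Hhas).
set k := index z (u :: A').
have Hk : k < size (u :: A') by rewrite index_mem.
have Hkz : nth 0 (u :: A') k = z by apply: nth_index.
have Hk' : k <= size A' by move: Hk => /=; lia.
have Hi' : i <= size B' by move: Hi => /=; lia.
set p := take k A' ++ rev (take i (w :: B')).
have Hwalk : walk t u p.
  rewrite walk_cat; split; first exact: walk_take.
  rewrite last_take // (set_nth_default 0 _ Hk) Hkz.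
  have := walk_rev t_sym (walk_take i Bw).
  by rewrite last_take // belast_take // (set_nth_default 0 _ Hi).
have Hlast : last u p = w.
  rewrite last_cat last_take // (set_nth_default 0 _ Hk) Hkz.
  move: Hi; rewrite /z; case: (i) => [|j] //= _.
  by rewrite rev_cons last_rcons.
have Hsize : 2 <= size p.
  rewrite size_cat size_rev !size_take_min.
  have -> : minn k (size A') = k by lia.
  have -> : minn i (size (w :: B')) = i by move: Hi; lia.
  have Huw' := t_neq Huw.
  have Hpu : forall d, dist u = d.+1 -> u != r /\ A' = parent u :: chp d (parent u).
    move=> d Hd; split; first by apply/eqP => E; move: Hd; rewrite E dist_r.
    by rewrite /A' Hd.
  have Hpw : forall d, dist w = d.+1 -> w != r /\ B' = parent w :: chp d (parent w).
    move=> d Hd; split; first by apply/eqP => E; move: Hd; rewrite E dist_r.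
    by rewrite /B' Hd.
  have Hk0 : k = 0 -> z = u by move=> E; rewrite -Hkz E.
  case Ei: i => [|[|j]].
  - have Hzw : z = w by rewrite /z Ei.
    have Hk1 : k <> 1.
      move=> E; move: Hkz; rewrite E /=.
      case Ed: (dist u) => [|d] in Hpu *.
        by move: Hk; rewrite E /A' Ed.
      have [Hur ->] := Hpu d (erefl _) => /= Hp; apply: H1; split=> //; by rewrite Hp.
    have : k <> 0 by move=> /Hk0; rewrite Hzw => E; apply: Huw'.
    lia.
  - have Hz : z = parent w /\ w != r.
      move: Hi; rewrite /z Ei /=.
      case Ed: (dist w) => [|d] in Hpw *; first by rewrite /B' Ed.
      by have [Hwr ->] := Hpw d (erefl _).
    have : k <> 0.
      move=> /Hk0 E; case: Hz => Hz Hwr; apply: H2; split=> //; by rewrite -Hz.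
    lia.
  - lia.
have Huniq : uniq (u :: p).
  rewrite /p -cat_cons cat_uniq rev_uniq; apply/and3P; split.
  - have -> : u :: take k A' = take k.+1 (u :: A') by [].
    exact: take_uniq.
  - apply/hasPn => y; rewrite mem_rev => Hy.
    have Hyi : index y (take i (w :: B')) < i.
      by move: Hy; rewrite -index_mem size_take_min; lia.
    have Hny : nth 0 (w :: B') (index y (take i (w :: B'))) = y.
      by rewrite -(nth_take _ Hyi) nth_index.
    have := before_find 0 Hyi; rewrite Hny /= => Hn.
    apply/negP; rewrite inE => /orP [/eqP E|/mem_take H].
      by move: Hn; rewrite E mem_head.
    by move: Hn; rewrite inE H orbT.
  - by apply: take_uniq.
case: Ht => _ _ _ Hac.
apply: (Hac u p Huniq Hsize Hwalk); rewrite Hlast; exact: t_sym.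
Qed.
End Tree.


Definition DA (V X : seq nat) := [seq v <- V | v \notin X].

Definition matching (V : seq nat) (a : nat -> nat -> Prop) (X : seq nat) (v0 : nat)
  (mt : nat -> nat -> Prop) :=
 [/\ (forall u d, mt u d -> [/\ a u d, u \in X, u \in V & d \in V]),
     (forall u d d', mt u d -> mt u d' -> d = d'),
     (forall u u' d, mt u d -> mt u' d -> u = u')
   & (forall u, u \in X -> u != v0 -> exists d, mt u d)].

Definition Good V (a : nat -> nat -> Prop) X :=
  (forall u v, a u v -> a v u) /\
  (forall u v, a u v -> u \in V /\ v \in V) /\
  {subset X <= V} /\
  (forall u v, a u v -> (u \in X) = (v \notin X)) /\
  (forall u, u \in V -> u \notin X -> exists w, a u w) /\
  staller_wins V a (DA V X) [::] [::] /\
  (forall v0, v0 \in X -> exists mt, matching V a X v0 mt).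

Section Sub.
Variables (U : seq nat) (t : nat -> nat -> Prop) (m : nat -> nat -> nat)
  (V : seq nat) (a : nat -> nat -> Prop) (X : seq nat).
Hypothesis Ht : is_tree U t.
Hypothesis Hmsym : forall x y, t x y -> m x y = m y x.
Hypothesis HmU : forall x y, t x y -> m x y \notin U.
Hypothesis Hminj : forall x y x' y', t x y -> t x' y' -> m x y = m x' y' ->
        (x = x' /\ y = y') \/ (x = y' /\ y = x').
Hypothesis HV : forall v, v \in V <-> v \in U \/ exists x y, t x y /\ v = m x y.
Hypothesis Ha : forall u v, a u v <-> exists x y, t x y /\
        ((u = x /\ v = m x y) \/ (u = m x y /\ v = x)).
Hypothesis HX : forall v, v \in X <-> v \in U.

Lemma sub_UV u : u \in U -> u \in V.
Proof. by move=> Hu; apply/HV; left. Qed.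

Lemma sub_mV x y : t x y -> m x y \in V.
Proof. by move=> H; apply/HV; right; exists x, y. Qed.

Lemma sub_aU u w : u \in U -> a u w -> exists y, t u y /\ w = m u y.
Proof.
move=> Hu /Ha [x [y [Hxy [[-> ->]|[E _]]]]]; first by exists y.
by move: (HmU Hxy); rewrite -E Hu.
Qed.

Lemma sub_notD u : u \in U -> u \notin DA V X.
Proof. by move=> Hu; rewrite mem_filter negb_and; apply/orP; left; rewrite negbK; apply/HX. Qed.

Lemma sub_minj_par r u u' : r \in U -> u \in U -> u != r -> u' \in U -> u' != r ->
  m u (parent t r u) = m u' (parent t r u') -> u = u'.
Proof.
move=> Hr Hu Hur Hu' Hur' E.
have [H1 D1] := parentP Ht Hr Hu Hur; have [H2 D2] := parentP Ht Hr Hu' Hur'.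
case: (Hminj H1 H2 E) => [[]//|[E1 E2]].
move: D1 D2; rewrite -E1 E2; clear; lia.
Qed.

Lemma sub_staller : staller_wins V a (DA V X) [::] [::].
Proof.
case: (Ht) => [[r Hr] _ _ _].
set leT := fun x y => dist t r y <= dist t r x.
set us := sort leT [seq x <- undup U | x != r].
set ds := [seq m u (parent t r u) | u <- us].
have Hus : forall u, (u \in us) = (u \in U) && (u != r).
  by move=> u; rewrite mem_sort mem_filter mem_undup andbC.
have Hds : forall d, d \in ds -> d \notin U.
  move=> d /mapP [u Hu ->]; move: Hu; rewrite Hus => /andP [Hu Hur].
  by apply: HmU; case: (parentP Ht Hr Hu Hur).
have Hsorted : sorted leT us.
  by apply: sort_sorted => x y; rewrite /leT; apply: leq_total.
have Htrans : transitive leT by move=> x y z; rewrite /leT => H1 H2; apply: leq_trans H2 H1.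
apply: (@peeling V a (DA V X) us ds r).
- by rewrite size_map.
- rewrite /= mem_cat negb_or cat_uniq; apply/andP; split.
    apply/andP; split; first by rewrite Hus eqxx andbF.
    by apply/negP => /Hds; rewrite Hr.
  apply/and3P; split.
  + by rewrite sort_uniq filter_uniq // undup_uniq.
  + apply/hasPn => d Hd; apply/negP; rewrite Hus => /andP [Hd' _].
    by move: (Hds d Hd); rewrite Hd'.
  + rewrite map_inj_in_uniq ?sort_uniq ?filter_uniq ?undup_uniq //.
    move=> u u'; rewrite !Hus => /andP [Hu Hur] /andP [Hu' Hur'].
    exact: sub_minj_par.
- by move=> u; rewrite Hus => /andP [Hu _]; apply: sub_UV.
- move=> d /mapP [u Hu ->]; move: Hu; rewrite Hus => /andP [Hu Hur].
  by apply: sub_mV; case: (parentP Ht Hr Hu Hur).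
- exact: sub_UV.
- move=> u; rewrite inE => /orP [/eqP ->|]; first exact: sub_notD.
  by rewrite Hus => /andP [Hu _]; apply: sub_notD.
- move=> i w Hi Haw.
  have Hui : nth 0 us i \in us by apply: mem_nth.
  move: (Hui); rewrite Hus => /andP [Hu Hur].
  have [y [Huy ->]] := sub_aU Hu Haw.
  have Hsd : size ds = size us by rewrite size_map.
  case: (tree_edge Ht Hr Huy) => [[_ Ep]|[Hyr Ep]].
    rewrite (take_nth 0) ?Hsd // mem_rcons inE; apply/orP; left.
    by rewrite (nth_map 0) // Ep.
  have [Hyu Hdy] := parentP Ht Hr (proj2 (t_in Ht Huy)) Hyr.
  rewrite Ep in Hyu Hdy.
  have Hyus : y \in us by rewrite Hus Hyr andbT; case: (t_in Ht Huy).
  set j := index y us.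
  have Hj : j < size us by rewrite index_mem.
  have Hnj : nth 0 us j = y by apply: nth_index.
  have Hji : j < i.
    rewrite ltnNge; apply/negP; rewrite leq_eqVlt => /orP [/eqP E|Hlt].
      by apply: (t_neq Ht Huy); rewrite -Hnj E.
    have := sorted_ltn_nth Htrans 0 Hsorted; move=> /(_ i j Hi Hj Hlt).
    rewrite /leT Hnj -Hdy; clear; lia.
  have -> : m (nth 0 us i) y = nth 0 ds j.
    by rewrite (nth_map 0) // Hnj Ep; apply: Hmsym.
  have Hji' : j < i.+1 by apply: ltnW.
  rewrite -(nth_take 0 Hji'); apply: mem_nth; rewrite size_take_min Hsd.
  by rewrite leq_min Hji'.
- move=> w Haw.
  have [y [Hry ->]] := sub_aU Hr Haw.
  case: (tree_edge Ht Hr Hry) => [[]|[Hyr Ep]]; first by rewrite eqxx.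
  have Hyus : y \in us by rewrite Hus Hyr andbT; case: (t_in Ht Hry).
  rewrite Hmsym //; apply/mapP; exists y => //; by rewrite Ep.
Qed.

Lemma sub_good : Good V a X.
Proof.
have Hin : forall u v, a u v -> u \in V /\ v \in V.
  move=> u v /Ha [x [y [Hxy [[-> ->]|[-> ->]]]]]; have [Hx _] := t_in Ht Hxy;
  split; (apply: sub_UV; done) || (apply: sub_mV; done).
split.
  move=> u v /Ha [x [y [Hxy H]]]; apply/Ha; exists x, y; split=> //; tauto.
split=> //.
split; first by move=> u /HX; apply: sub_UV.
split.
  move=> u v /Ha [x [y [Hxy [[-> ->]|[-> ->]]]]]; have [Hx _] := t_in Ht Hxy.
    have /HX -> := Hx; apply/esym/negP => /HX; by rewrite (negbTE (HmU Hxy)).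
  have /HX -> := Hx; apply/negP => /HX; by rewrite (negbTE (HmU Hxy)).
split.
  move=> u /HV [Hu|[x [y [Hxy ->]]]] HuX; first by move: HuX; have /HX -> := Hu.
  by exists x; apply/Ha; exists x, y; split=> //; right.
split; first exact: sub_staller.
move=> v0 /HX Hv0.
exists (fun u d => [/\ u \in U, u != v0 & d = m u (parent t v0 u)]); split.
- move=> u d [Hu Huv ->]; have [Hp _] := parentP Ht Hv0 Hu Huv.
  split; [apply/Ha; exists u, (parent t v0 u); split=> //; left | apply/HX | apply: sub_UV | apply: sub_mV] => //.
- by move=> u d d' [_ _ ->] [_ _ ->].
- move=> u u' d [Hu Huv ->] [Hu' Huv' E]; exact: (sub_minj_par Hv0 Hu Huv Hu' Huv').
- move=> u /HX Hu Huv; by exists (m u (parent t v0 u)).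
Qed.

End Sub.


Lemma count_sub_lt (s : seq nat) (p p' : pred nat) :
  (forall z, p' z -> p z) -> (exists z, [/\ z \in s, p z & ~~ p' z]) ->
  count p' s < count p s.
Proof.
move=> Hsub; elim: s => [|y s IH] [z [Hz Hp Hp']] //=.
have Hc : count p' s <= count p s by apply: sub_count => x /Hsub.
move: Hz; rewrite inE => /orP [/eqP E|Hz].
  subst y; rewrite (negbTE Hp') Hp /=; by rewrite add0n add1n ltnS.
have := IH (ex_intro _ z (And3 Hz Hp Hp')).
case: (p' y) (Hsub y) => [->//|_]; case: (p y) => /=; lia.
Qed.

Section Sim.
Variables (V : seq nat) (a : nat -> nat -> Prop) (X : seq nat).
Variables (V' : seq nat) (a' : nat -> nat -> Prop) (X' : seq nat).
Variables (c e : nat) (P : seq (seq nat)).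
Hypothesis HaV : forall u v, a u v -> u \in V /\ v \in V.
Hypothesis Hbip : forall u v, a u v -> (u \in X) = (v \notin X).
Hypothesis HXV : {subset X <= V}.
Hypothesis Hce : a c e.
Hypothesis HcX : c \in X.
Hypothesis HV'V : forall v, v \in V -> v \in V'.
Hypothesis HCV' : forall v, v \in flatten P -> v \in V'.
Hypothesis HV'inv : forall v, v \in V' -> v \in V \/ v \in flatten P.
Hypothesis HCV : forall v, v \in flatten P -> v \notin V.
Hypothesis Hpos : forall q q' i i', q \in P -> q' \in P -> i < size q -> i' < size q' ->
  nth 0 q i = nth 0 q' i' -> q = q' /\ i = i'.
Hypothesis HCin : forall z, z \in flatten P ->
  exists q i, [/\ q \in P, i < size q & z = nth 0 q i].
Hypothesis Heven : forall q, q \in P -> ~~ odd (size q).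
Hypothesis HXX' : {subset X <= X'}.
Definition L q := c :: q ++ [:: e].
Hypothesis F2 : forall u w, u \in V -> u != c -> u != e -> a' u w -> a u w.
Hypothesis F3 : forall w, a' c w ->
  (a c w /\ w != e) \/ w = e \/ exists q, [/\ q \in P, 0 < size q & w = nth 0 q 0].
Hypothesis F4 : forall q i w, q \in P -> i < size q -> a' (nth 0 q i) w ->
  w = nth 0 (L q) i \/ w = nth 0 (L q) i.+2.
Hypothesis F5 : forall q i, q \in P -> i < size q -> (nth 0 q i \in X') = odd i.

Lemma cV : c \in V. Proof. by case: (HaV Hce). Qed.
Lemma eV : e \in V. Proof. by case: (HaV Hce). Qed.
Lemma eX : e \notin X. Proof. by rewrite -(Hbip Hce). Qed.
Lemma ce_neq : c != e. Proof. by apply/eqP => E; move: eX; rewrite -E HcX. Qed.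
Lemma qV q i : q \in P -> i < size q -> nth 0 q i \notin V.
Proof. by move=> Hq Hi; apply: HCV; apply/flattenP; exists q => //; apply: mem_nth. Qed.
Lemma qC q i : q \in P -> i < size q -> nth 0 q i \in flatten P.
Proof. by move=> Hq Hi; apply/flattenP; exists q => //; apply: mem_nth. Qed.
Lemma qneq_V q i z : q \in P -> i < size q -> z \in V -> nth 0 q i != z.
Proof. by move=> Hq Hi Hz; apply/eqP => E; move: (qV Hq Hi); rewrite E Hz. Qed.

Definition fr (S M : seq nat) : pred nat := fun z => (z \notin S) && (z \notin M).
Definition nfree S M := count (fr S M) V'.
Definition cdead (M : seq nat) := exists z, (z = c \/ a c z) /\ z \in M.
Definition pairOK (S' M' : seq nat) q j :=
  (fr S' M' (nth 0 q j.*2) && fr S' M' (nth 0 q j.*2.+1)) ||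
  ((nth 0 q j.*2 \in S') && (nth 0 q j.*2.+1 \in M')).

Definition Inv S' M' S M :=
  [/\ (forall z, z \in S -> z \notin M),
      (forall z, z \in V -> z != c -> z != e -> (z \in S') = (z \in S)),
      (forall z, z \in V -> z != c -> z != e -> z \in M' -> z \in M),
      ((c \in S') + (e \in S') = (c \in S) + (e \in S))%N &
      (fr S M c + fr S M e <= fr S' M' c + fr S' M' e)%N] /\
  [/\ (e \in M' -> e \in M),
      (e \in S -> e \in S'),
      ((c \in S) || (e \in S) -> ~ cdead M -> e \in S') &
      (~ cdead M -> forall q j, q \in P -> j.*2.+1 < size q -> pairOK S' M' q j)].

Lemma cdead_cons z M : cdead M -> cdead (z :: M).
Proof. by move=> [x [Hx HxM]]; exists x; split=> //; rewrite inE HxM orbT. Qed.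

Lemma pairOK_cons S' M' q j x y : q \in P -> j.*2.+1 < size q ->
  x != nth 0 q j.*2 -> x != nth 0 q j.*2.+1 ->
  y != nth 0 q j.*2 -> y != nth 0 q j.*2.+1 ->
  pairOK (x :: S') (y :: M') q j = pairOK S' M' q j.
Proof.
move=> _ _ H1 H2 H3 H4.
by rewrite /pairOK /fr !inE ![nth _ _ _ == x]eq_sym ![nth _ _ _ == y]eq_sym
  (negbTE H1) (negbTE H2) (negbTE H3) (negbTE H4).
Qed.

Lemma pairOK_consS S' M' q j x : q \in P -> j.*2.+1 < size q ->
  x != nth 0 q j.*2 -> x != nth 0 q j.*2.+1 ->
  pairOK (x :: S') M' q j = pairOK S' M' q j.
Proof.
move=> _ _ H1 H2.
by rewrite /pairOK /fr !inE ![nth _ _ _ == x]eq_sym (negbTE H1) (negbTE H2).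
Qed.

Lemma pairOK_consM S' M' q j y : q \in P -> j.*2.+1 < size q ->
  y != nth 0 q j.*2 -> y != nth 0 q j.*2.+1 ->
  pairOK S' (y :: M') q j = pairOK S' M' q j.
Proof.
move=> _ _ H3 H4.
by rewrite /pairOK /fr !inE ![nth _ _ _ == y]eq_sym (negbTE H3) (negbTE H4).
Qed.

Lemma pair_neq q q' j j' k k' : q \in P -> q' \in P ->
  j.*2.+1 < size q -> j'.*2.+1 < size q' -> ~~ ((q' == q) && (j' == j)) ->
  (k = j.*2 \/ k = j.*2.+1) -> (k' = j'.*2 \/ k' = j'.*2.+1) ->
  nth 0 q k != nth 0 q' k'.
Proof.
move=> Hq Hq' Hj Hj' Hne Hk Hk'; apply/eqP => E.
have [||E1 E2] := Hpos Hq Hq' _ _ E.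
- by case: Hk => ->; lia.
- by case: Hk' => ->; lia.
subst q'; move: Hne; rewrite eqxx /=; apply/negP; rewrite negbK; apply/eqP.
subst k'; clear -Hk Hk'; lia.
Qed.

Lemma fr_consM S M z x : (fr S (z :: M) x <= fr S M x)%N.
Proof. by rewrite /fr inE negb_or; case: (x == z); case: (x \in S); case: (x \in M). Qed.
Lemma fr_consS S M z x : (fr (z :: S) M x <= fr S M x)%N.
Proof. by rewrite /fr inE negb_or; case: (x == z); case: (x \in S); case: (x \in M). Qed.
Lemma fr_consM_neq S M z x : x != z -> fr S (z :: M) x = fr S M x.
Proof. by rewrite /fr inE => /negbTE ->. Qed.
Lemma fr_consS_neq S M z x : x != z -> fr (z :: S) M x = fr S M x.
Proof. by rewrite /fr inE => /negbTE ->. Qed.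
Lemma fr_consM_eq S M x : fr S (x :: M) x = false.
Proof. by rewrite /fr mem_head andbF. Qed.
Lemma fr_consS_eq S M x : fr (x :: S) M x = false.
Proof. by rewrite /fr mem_head. Qed.

Lemma inv_local S' M' S M q j : Inv S' M' S M -> q \in P -> j.*2.+1 < size q ->
  fr S' M' (nth 0 q j.*2) -> fr S' M' (nth 0 q j.*2.+1) ->
  Inv (nth 0 q j.*2 :: S') (nth 0 q j.*2.+1 :: M') S M.
Proof.
move=> [[I0 I7 I8 K1 K4] [K5 K2 K9 K6]] Hq Hj Hfp Hfv.
have Hj0 : j.*2 < size q by apply: ltnW.
set pp := nth 0 q j.*2 in Hfp *; set vv := nth 0 q j.*2.+1 in Hfv *.
have Hnp : forall z, z \in V -> (z == pp) = false.
  by move=> z Hz; apply/negbTE; rewrite eq_sym; apply: qneq_V.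
have Hnv : forall z, z \in V -> (z == vv) = false.
  by move=> z Hz; apply/negbTE; rewrite eq_sym; apply: qneq_V.
have Hc := Hnp _ cV; have He := Hnp _ eV; have Hc' := Hnv _ cV; have He' := Hnv _ eV.
split; split => //.
- by move=> z Hz Hzc Hze; rewrite inE Hnp // I7.
- by move=> z Hz Hzc Hze; rewrite inE Hnv //; apply: I8.
- by rewrite !inE Hc He.
- by rewrite /fr !inE Hc He Hc' He'.
- by rewrite inE He'; apply: K5.
- by move=> /K2; rewrite inE => ->; rewrite orbT.
- by move=> H1 H2; rewrite inE K9 // orbT.
move=> Hnd q' j' Hq' Hj'.
case: (boolP ((q' == q) && (j' == j))) => [/andP [/eqP -> /eqP ->]|Hne].
  by rewrite /pairOK !mem_head !andbT orbT.
rewrite pairOK_cons //; first exact: K6.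
- by apply: pair_neq Hq Hq' Hj Hj' Hne _ _; [left|left].
- by apply: pair_neq Hq Hq' Hj Hj' Hne _ _; [left|right].
- by apply: pair_neq Hq Hq' Hj Hj' Hne _ _; [right|left].
- by apply: pair_neq Hq Hq' Hj Hj' Hne _ _; [right|right].
Qed.

Lemma inv_dom_old S' M' S M w z : Inv S' M' S M ->
  w \in V -> w != c -> w != e -> z \in V -> fr S M z -> w \in z :: M ->
  Inv S' (w :: M') S (z :: M).
Proof.
move=> [[I0 I7 I8 K1 K4] [K5 K2 K9 K6]] Hw Hwc Hwe Hz /andP [HzS HzM] HwzM.
split; split => //.
- move=> x Hx; rewrite inE negb_or I0 // andbT; apply/eqP => E; move: HzS; by rewrite -E Hx.
- move=> x Hx Hxc Hxe; rewrite inE => /orP [/eqP ->//|/I8]; rewrite inE => -> //; by rewrite orbT.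
- rewrite (fr_consM_neq S' M' (x:=c)) 1?eq_sym // (fr_consM_neq S' M' (x:=e)) 1?eq_sym //.
  apply: leq_trans K4; apply: leq_add; exact: fr_consM.
- by rewrite inE eq_sym (negbTE Hwe) /= => /K5 H; rewrite inE H orbT.
- by move=> H1 H2; apply: K9 => // H3; apply: H2; apply: cdead_cons.
- move=> Hnd q j Hq Hj; rewrite pairOK_consM //.
    by apply: K6 => // H3; apply: Hnd; apply: cdead_cons.
  + by rewrite eq_sym; apply: qneq_V Hq (ltnW Hj) Hw.
  + by rewrite eq_sym; apply: qneq_V Hq Hj Hw.
Qed.

Lemma sum_dropM S M z : (z = c \/ z = e) -> fr S M z ->
  (fr S (z :: M) c + fr S (z :: M) e).+1 = (fr S M c + fr S M e)%N.
Proof.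
have Hce0 := ce_neq; have Hec : e != c by rewrite eq_sym.
case=> -> Hf.
  by rewrite fr_consM_eq fr_consM_neq // Hf.
by rewrite fr_consM_eq fr_consM_neq // Hf addn1 addnC.
Qed.

Lemma sum_dropS S M z : (z = c \/ z = e) -> fr S M z ->
  (fr (z :: S) M c + fr (z :: S) M e).+1 = (fr S M c + fr S M e)%N.
Proof.
have Hce0 := ce_neq; have Hec : e != c by rewrite eq_sym.
case=> -> Hf.
  by rewrite fr_consS_eq fr_consS_neq // Hf.
by rewrite fr_consS_eq fr_consS_neq // Hf addn1 addnC.
Qed.

Lemma sum_addS (S : seq nat) z : (z = c \/ z = e) -> z \notin S ->
  ((c \in z :: S) + (e \in z :: S) = ((c \in S) + (e \in S)).+1)%N.
Proof.
have Hce0 := ce_neq; have Hec : e != c by rewrite eq_sym.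
case=> -> Hz; rewrite !inE eqxx (negbTE Hz) /=.
  by rewrite (negbTE Hec).
by rewrite (negbTE Hce0) addn1 addnC.
Qed.

Lemma sum_le0 S M z : (fr S M c + fr S M e = 0)%N ->
  (fr S (z :: M) c + fr S (z :: M) e = 0)%N.
Proof.
move=> H; apply/eqP; rewrite -leqn0; rewrite -H.
by apply: leq_add; apply: fr_consM.
Qed.

Lemma inv_dom_ce S' M' S M w z : Inv S' M' S M -> (w = c \/ w = e) ->
  fr S' M' w -> z \in V -> fr S M z -> (w = e -> fr S M e -> z = e) ->
  ((fr S M c + fr S M e = 0)%N \/ z = c \/ z = e) ->
  Inv S' (w :: M') S (z :: M).
Proof.
move=> [[I0 I7 I8 K1 K4] [K5 K2 K9 K6]] Hw Hfw Hz Hfz Hze Hzce.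
have HwV : w \in V by case: Hw => ->; [apply: cV|apply: eV].
move: (Hfz) => /andP [HzS HzM].
split; split => //.
- move=> x Hx; rewrite inE negb_or I0 // andbT; apply/eqP => E; move: HzS; by rewrite -E Hx.
- move=> x Hx Hxc Hxe; rewrite inE => /orP [/eqP E|/(I8 x Hx Hxc Hxe) H].
    by case: Hw E => -> E; [move: Hxc|move: Hxe]; rewrite E eqxx.
  by apply/orP; right.
- have HA' := sum_dropM Hw Hfw.
  case: Hzce => [H0|Hzce].
    by rewrite (sum_le0 z H0).
  have HA := sum_dropM Hzce Hfz.
  by move: K4; rewrite -HA -HA' ltnS.
- rewrite inE => /orP [/eqP Ee|/K5 H]; last by rewrite inE H orbT.
  case: (boolP (fr S M e)) => [He|].
    by rewrite -Ee in Hfw; rewrite Hze // ?mem_head.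
  rewrite /fr negb_and !negbK => /orP [HeS|HeM]; last by rewrite inE HeM orbT.
  by move: Hfw; rewrite -Ee /fr (K2 HeS).
- by move=> H1 H2; apply: K9 => // H3; apply: H2; apply: cdead_cons.
- move=> Hnd q j Hq Hj; rewrite pairOK_consM //.
  + by apply: K6 => // H3; apply: Hnd; apply: cdead_cons.
  + by rewrite eq_sym; apply: qneq_V Hq (ltnW Hj) HwV.
  + by rewrite eq_sym; apply: qneq_V Hq Hj HwV.
Qed.

Lemma inv_dom_chain S' M' S M w z : Inv S' M' S M -> w \in flatten P ->
  z \in V -> fr S M z -> (cdead M \/ z = c \/ a c z) -> Inv S' (w :: M') S (z :: M).
Proof.
move=> [[I0 I7 I8 K1 K4] [K5 K2 K9 K6]] Hw Hz Hfz Hd.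
move: (Hfz) => /andP [HzS HzM].
have Hnw : forall x, x \in V -> x != w.
  by move=> x Hx; apply/eqP => E; move: (HCV Hw); rewrite -E Hx.
have Hdead : cdead (z :: M).
  case: Hd => [H|H]; first exact: cdead_cons.
  by exists z; split=> //; rewrite mem_head.
split; split => //.
- move=> x Hx; rewrite inE negb_or I0 // andbT; apply/eqP => E; move: HzS; by rewrite -E Hx.
- move=> x Hx Hxc Hxe; rewrite inE (negbTE (Hnw x Hx)) /= => /(I8 x Hx Hxc Hxe) H.
  by apply/orP; right.
- rewrite (fr_consM_neq S' M' (Hnw c cV)) (fr_consM_neq S' M' (Hnw e eV)).
  apply: leq_trans K4; apply: leq_add; exact: fr_consM.
- by rewrite inE (negbTE (Hnw e eV)) /= => /K5 H; rewrite inE H orbT.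
Qed.

Definition mv S' M' v := if (v == c) || (v == e) then (if fr S' M' e then e else c) else v.

Lemma inv_stal_move S' M' S M v : Inv S' M' S M -> v \in V -> fr S M v ->
  [/\ mv S' M' v \in V, fr S' M' (mv S' M' v) & Inv (mv S' M' v :: S') M' (v :: S) M].
Proof.
move=> [[I0 I7 I8 K1 K4] [K5 K2 K9 K6]] Hv Hfv.
move: (Hfv) => /andP [HvS HvM].
rewrite /mv; case: (boolP ((v == c) || (v == e))) => [Hvce|Hvce].
  have Hvce' : v = c \/ v = e by case/orP: Hvce => /eqP ->; [left|right].
  set v' := if fr S' M' e then e else c.
  have Hv' : v' = c \/ v' = e by rewrite /v'; case: (fr S' M' e); [right|left].
  have Hfv' : fr S' M' v'.
    rewrite /v'; case: (boolP (fr S' M' e)) => // He.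
    have := K4; rewrite -(sum_dropM (M:=M) Hvce' Hfv) (negbTE He) addn0.
    by case: (fr S' M' c).
  have Hv'V : v' \in V by case: Hv' => ->; [apply: cV|apply: eV].
  move: (Hfv') => /andP [Hv'S Hv'M].
  split=> //; split; split => //.
  - move=> x; rewrite inE => /orP [/eqP ->|/I0] //.
  - move=> x Hx Hxc Hxe; rewrite !inE I7 //.
    have Hxv : (x == v) = false.
      by apply/negbTE; case: Hvce' => ->.
    have Hxv' : (x == v') = false.
      by apply/negbTE; case: Hv' => ->.
    by rewrite Hxv Hxv'.
  - by rewrite (sum_addS Hv' Hv'S) (sum_addS Hvce' HvS) K1.
  - have HA := sum_dropS Hvce' Hfv; have HA' := sum_dropS Hv' Hfv'.
    by move: K4; rewrite -HA -HA' ltnS.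
  - rewrite inE => /orP [/eqP Ee|/K2 H]; last by rewrite inE H orbT.
    rewrite /v'; case: (boolP (fr S' M' e)) => He; first by rewrite mem_head.
    move: He; rewrite /fr negb_and !negbK => /orP [H|HeM]; first by rewrite inE H orbT.
    by move: HvM; rewrite -Ee (K5 HeM).
  - move=> _ Hnd; rewrite /v'; case: (boolP (fr S' M' e)) => He; first by rewrite mem_head.
    move: He; rewrite /fr negb_and !negbK => /orP [H|HeM]; first by rewrite inE H orbT.
    by case: Hnd; exists e; split=> //; [right|apply: K5].
  - move=> Hnd q j Hq Hj; rewrite pairOK_consS //.
    + exact: K6.
    + by rewrite eq_sym; apply: qneq_V Hq (ltnW Hj) Hv'V.
    + by rewrite eq_sym; apply: qneq_V Hq Hj Hv'V.
move: Hvce; rewrite negb_or => /andP [Hvc Hve].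
have Hcv : c != v by rewrite eq_sym.
have Hev : e != v by rewrite eq_sym.
have Hfv' : fr S' M' v.
  rewrite /fr I7 // HvS /=; apply/negP => /(I8 v Hv Hvc Hve); by rewrite (negbTE HvM).
split=> //; split; split => //.
- move=> x; rewrite inE => /orP [/eqP ->|/I0] //.
- by move=> x Hx Hxc Hxe; rewrite !inE I7.
- by rewrite !inE (negbTE Hcv) (negbTE Hev).
- by rewrite !fr_consS_neq.
- by rewrite inE (negbTE Hev) => /K2 H; rewrite inE H orbT.
- by rewrite !inE (negbTE Hcv) (negbTE Hev) => H1 H2; apply/orP; right; apply: K9.
- move=> Hnd q j Hq Hj; rewrite pairOK_consS //.
  + exact: K6.
  + by rewrite eq_sym; apply: qneq_V Hq (ltnW Hj) Hv.
  + by rewrite eq_sym; apply: qneq_V Hq Hj Hv.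
Qed.

Lemma L_nthS q i : i < size q -> nth 0 (L q) i.+1 = nth 0 q i.
Proof. by move=> Hi; rewrite /L /= nth_cat Hi. Qed.

Lemma L_nth_last q : nth 0 (L q) (size q).+1 = e.
Proof. by rewrite /L /= nth_cat ltnn subnn. Qed.

Lemma even_lt n k : ~~ odd n -> k.*2 < n -> k.*2.+1 < n.
Proof.
move=> He Hk; rewrite -(odd_double_half n) (negbTE He) add0n in Hk *.
move: Hk; clear; lia.
Qed.

Lemma find_top S' M' S M q j : Inv S' M' S M -> ~ cdead M -> e \in S' -> q \in P ->
  j.*2.+1 < size q -> fr S' M' (nth 0 q j.*2) -> fr S' M' (nth 0 q j.*2.+1) ->
  exists j', [/\ j'.*2.+1 < size q, fr S' M' (nth 0 q j'.*2),
                 fr S' M' (nth 0 q j'.*2.+1) & nth 0 (L q) j'.*2.+3 \in S'].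
Proof.
move=> HI Hnd HeS Hq.
have K6 : forall j, j.*2.+1 < size q -> pairOK S' M' q j.
  by case: HI => _ [_ _ _ K6] j0 Hj0; apply: K6.
have Hev := Heven Hq.
suff H : forall n j, size q - j.*2 <= n -> j.*2.+1 < size q ->
    fr S' M' (nth 0 q j.*2) -> fr S' M' (nth 0 q j.*2.+1) ->
    exists j', [/\ j'.*2.+1 < size q, fr S' M' (nth 0 q j'.*2),
                 fr S' M' (nth 0 q j'.*2.+1) & nth 0 (L q) j'.*2.+3 \in S'].
  by apply: (H (size q - j.*2)).
elim=> [|n IH] j0 Hn Hj Hf1 Hf2.
  by move: Hn Hj; clear; lia.
case: (boolP (j0.*2.+2 == size q)) => [/eqP E|Hne].
  by exists j0; split=> //; rewrite E L_nth_last.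
have Hj2 : j0.*2.+2 < size q by rewrite ltn_neqAle Hne Hj.
have Hj3 : (j0.+1).*2.+1 < size q.
  by apply: even_lt => //; rewrite doubleS.
have E3 : nth 0 (L q) j0.*2.+3 = nth 0 q (j0.+1).*2.
  by rewrite doubleS L_nthS.
case: (boolP (nth 0 q (j0.+1).*2 \in S')) => Hin.
  by exists j0; split=> //; rewrite E3.
have := K6 _ Hj3; rewrite /pairOK (negbTE Hin) /= orbF => /andP [Hf1' Hf2'].
apply: (IH j0.+1) => //.
by move: Hn Hj3; rewrite doubleS; clear; lia.
Qed.

Definition SWA := staller_wins V a (DA V X).
Definition SW' := staller_wins V' a' (DA V' X').

Lemma qV' q i : q \in P -> i < size q -> nth 0 q i \in V'.
Proof. by move=> Hq Hi; apply: HCV'; apply: qC. Qed.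

Lemma pair_ne q j : q \in P -> j.*2.+1 < size q -> nth 0 q j.*2.+1 != nth 0 q j.*2.
Proof.
move=> Hq Hj; apply/eqP => E.
have [_ ] := Hpos Hq Hq Hj (ltnW Hj) E; clear; lia.
Qed.

Lemma force_win S' M' q j w : q \in P -> j.*2.+1 < size q ->
  fr S' M' (nth 0 q j.*2) -> fr S' M' (nth 0 q j.*2.+1) ->
  nth 0 (L q) j.*2.+3 \in S' -> w \notin M' -> w != nth 0 q j.*2.+1 ->
  SW' (nth 0 q j.*2 :: S') (w :: M').
Proof.
move=> Hq Hj /andP [H1S H1M] /andP [H2S H2M] Hsucc HwM Hwv.
apply: (@SW_step _ _ _ _ _ (nth 0 q j.*2.+1)).
- exact: qV'.
- by rewrite inE negb_or pair_ne.
- by rewrite inE negb_or H2M andbT eq_sym.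
left; exists (nth 0 q j.*2.+1); split.
- exact: qV'.
- by rewrite mem_filter F5 //= odd_double.
move=> z [->|Hz]; first by rewrite mem_head.
case: (F4 Hq Hj Hz) => ->.
  by rewrite L_nthS ?(ltnW Hj) // !inE eqxx orbT.
by rewrite !inE Hsucc !orbT.
Qed.

Lemma nfree_local S' M' x y : x \in V' -> fr S' M' x -> nfree (x :: S') (y :: M') < nfree S' M'.
Proof.
move=> Hx Hf; apply: count_sub_lt.
  move=> z; rewrite /fr !inE !negb_or => /andP [/andP [_ ->] /andP [_ ->]] //.
by exists x; split=> //; rewrite /fr mem_head.
Qed.

Lemma simwin S' M' S M v : Inv S' M' S M -> v \in V -> fr S M v ->
  (e \in S' -> ~ cdead M -> forall q j, q \in P -> j.*2.+1 < size q ->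
      ~~ (fr S' M' (nth 0 q j.*2) && fr S' M' (nth 0 q j.*2.+1))) ->
  (exists u, [/\ u \in V, u \notin DA V X & nbhd_claimed a (v :: S) u]) ->
  exists u, [/\ u \in V', u \notin DA V' X' & nbhd_claimed a' (mv S' M' v :: S') u].
Proof.
move=> HI Hv Hfv Hnofree [u [Hu HuD Hn]].
have [_ _ [[I0' I7' I8' K1' K4'] [K5' K2' K9' K6']]] := inv_stal_move HI Hv Hfv.
case: HI => [[I0 I7 I8 K1 K4] [K5 K2 K9 K6]].
set v' := mv S' M' v in I7' K1' K2' *.
have HuX : u \in X by move: HuD; rewrite mem_filter Hu andbT negbK.
exists u; split; first exact: HV'V.
  by rewrite mem_filter negb_and negbK HXX'.
move: (Hfv) => /andP [HvS HvM].
have HuS : u \in v :: S by apply: Hn; left.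
case: (eqVneq u c) => [Euc|Huc].
  subst u.
  have HeS : e \in v :: S by apply: Hn; right.
  have Hboth : (c \in v' :: S') && (e \in v' :: S').
    move: K1'; rewrite HuS HeS /=; case: (c \in v' :: S'); case: (e \in v' :: S') => //.
  case/andP: Hboth => Hc' He'.
  have Hnd : ~ cdead M.
    move=> [z [Hz HzM]]; have := Hn z Hz; rewrite inE => /orP [/eqP E|HzS].
      by move: HvM; rewrite -E HzM.
    by move: (I0 z HzS); rewrite HzM.
  have Hone : (c \in S) || (e \in S).
    move: HuS HeS; rewrite !inE => /orP [/eqP E1|->//] /orP [/eqP E2|->]; last by rewrite orbT.
    by move: ce_neq; rewrite E1 E2 eqxx.
  have HeS' : e \in S' by apply: K9.
  move=> z [->//|Hz].
  case: (F3 Hz) => [[Hcz Hze]|[->//|[q [Hq Hsz ->]]]].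
    have HzV : z \in V by case: (HaV Hcz).
    have Hzc : z != c.
      by apply/eqP => E; move: (Hbip Hcz); rewrite HcX E HcX.
    by rewrite I7' // Hn //; right.
  have Hq1 : 0.*2.+1 < size q.
    by apply: even_lt; [apply: Heven|].
  have := K6 Hnd q 0 Hq Hq1; rewrite /pairOK.
  have := Hnofree HeS' Hnd q 0 Hq Hq1 => /negbTE -> /= /andP [H _].
  by rewrite inE H orbT.
have Hue : u != e by apply/eqP => E; move: HuX; rewrite E (negbTE eX).
move=> z [->|Hz]; first by rewrite I7'.
have Haz := F2 Hu Huc Hue Hz.
have HzS : z \in v :: S by apply: Hn; right.
have HzV : z \in V by case: (HaV Haz).
have Hzc : z != c by apply/eqP => E; move: (Hbip Haz); rewrite HuX E HcX.
case: (eqVneq z e) => [Eze|Hze]; first by subst z; apply: K2'.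
by rewrite I7'.
Qed.

Lemma dom_phase S M :
  (exists w, [/\ w \in V, w \notin S & w \notin M]) ->
  (forall w, w \in V -> w \notin S -> w \notin M ->
     forall n S' M', nfree S' M' < n -> Inv S' M' S (w :: M) -> SW' S' M') ->
  ~ (exists u, [/\ u \in V, u \notin DA V X & nbhd_claimed a S u]) ->
  forall n S' M', nfree S' M' < n -> Inv S' M' S M ->
  (exists w, [/\ w \in V', w \notin S' & w \notin M']) /\
  (forall w, w \in V' -> w \notin S' -> w \notin M' -> SW' S' (w :: M')).
Proof.
move=> [w0 [Hw0 Hw0S Hw0M]] Hall Hnw.
have Hfw0 : fr S M w0 by rewrite /fr Hw0S Hw0M.
elim=> [|n IH] S' M' Hn HI //.
have HI' := HI; case: HI' => [[I0 I7 I8 K1 K4] [K5 K2 K9 K6]].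
have Happ : forall z w, z \in V -> fr S M z -> Inv S' (w :: M') S (z :: M) ->
    SW' S' (w :: M').
  move=> z w Hz /andP [HzS HzM] HI2; exact: (Hall z Hz HzS HzM _ _ _ (ltnSn _) HI2).
split.
  case: (boolP ((w0 == c) || (w0 == e))) => Hce'.
    have Hpos' : (0 < fr S' M' c + fr S' M' e)%N.
      apply: leq_trans K4.
      by case/orP: Hce' => /eqP <-; rewrite Hfw0 // addn1.
    case: (boolP (fr S' M' c)) => Hc.
      by exists c; move: Hc => /andP [? ?]; split=> //; apply: HV'V; apply: cV.
    have He : fr S' M' e by move: Hpos'; rewrite (negbTE Hc); case: (fr S' M' e).
    by exists e; move: He => /andP [? ?]; split=> //; apply: HV'V; apply: eV.
  move: Hce'; rewrite negb_or => /andP [Hw0c Hw0e].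
  exists w0; split; first exact: HV'V.
    by rewrite I7.
  by apply/negP => /(I8 w0 Hw0 Hw0c Hw0e); rewrite (negbTE Hw0M).
move=> w Hw HwS HwM.
have Hfw : fr S' M' w by rewrite /fr HwS HwM.
case: (HV'inv Hw) => [HwV|HwC].
  case: (boolP ((w == c) || (w == e))) => Hwce.
    have Hwce' : w = c \/ w = e by case/orP: Hwce => /eqP ->; [left|right].
    case: (boolP ((w == e) && fr S M e)) => Hwe.
      case/andP: Hwe => _ He.
      by apply: (Happ e) => //; [apply: eV | apply: inv_dom_ce => //; [apply: eV|right; right]].
    case: (boolP (fr S M c)) => Hc.
      apply: (Happ c) => //; first exact: cV.
      apply: inv_dom_ce => //; first exact: cV.
        by move=> E1 E2; move: Hwe; rewrite E1 eqxx E2.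
      by right; left.
    case: (boolP (fr S M e)) => He.
      apply: (Happ e) => //; first exact: eV.
      by apply: inv_dom_ce => //; [apply: eV|right; right].
    apply: (Happ w0) => //; apply: inv_dom_ce => //.
      by move=> _ He'; move: He; rewrite He'.
    by left; rewrite (negbTE Hc) (negbTE He).
  move: Hwce; rewrite negb_or => /andP [Hwc Hwe].
  case: (boolP (w \in M)) => HwMA.
    by apply: (Happ w0) => //; apply: inv_dom_old => //; rewrite inE HwMA orbT.
  have HwSA : w \notin S by rewrite -I7.
  have Hfw' : fr S M w by rewrite /fr HwSA HwMA.
  by apply: (Happ w) => //; apply: inv_dom_old => //; rewrite mem_head.
case: (classic (cdead M)) => Hd.
  by apply: (Happ w0) => //; apply: inv_dom_chain => //; left.
have [q [i [Hq Hi Ew]]] := HCin HwC.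
case: (boolP (odd i)) => Hodd.
  set j := i./2.
  have Ei : i = j.*2.+1 by rewrite -{1}(odd_double_half i) Hodd add1n.
  rewrite Ei in Hi; subst w; rewrite Ei in Hfw HwS HwM *.
  have := K6 Hd q j Hq Hi; rewrite /pairOK (negbTE HwM) andbF orbF Hfw andbT => Hf1.
  apply: (@SW_step _ _ _ _ _ (nth 0 q j.*2)).
  - exact: qV' Hq (ltnW Hi).
  - by case/andP: Hf1.
  - rewrite inE negb_or; case/andP: Hf1 => _ ->; rewrite andbT eq_sym.
    exact: pair_ne.
  right; apply: IH.
    apply: (leq_trans (nfree_local (nth 0 q j.*2.+1) (qV' Hq (ltnW Hi)) Hf1)).
    by rewrite -ltnS.
  exact: inv_local.
have [z [Hz HzS]] : exists z, (z = c \/ a c z) /\ z \notin S.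
  apply: NNPP => Hno; apply: Hnw; exists c; split.
  - exact: cV.
  - by rewrite mem_filter HcX.
  move=> z Hz; apply: NNPP => HzS; apply: Hno; exists z; split=> //; exact/negP.
have HzM : z \notin M by apply/negP => HzM; apply: Hd; exists z.
have HzV : z \in V by case: Hz => [->|/HaV []]; [apply: cV|].
by apply: (Happ z) => //; [rewrite /fr HzS HzM|apply: inv_dom_chain => //; [rewrite /fr HzS HzM|right]].
Qed.

Lemma stal_phase S M : SWA S M ->
  forall n S' M', nfree S' M' < n -> Inv S' M' S M -> SW' S' M'.
Proof.
move=> H; elim/sw_ind2: H => {S M} S M v Hv HvS HvM Hor.
elim=> [|n IHn] S' M' Hn HI //.
have Hfv : fr S M v by rewrite /fr HvS HvM.
case: (classic (e \in S' /\ ~ cdead M /\ exists q j, [/\ q \in P, j.*2.+1 < size q,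
    fr S' M' (nth 0 q j.*2) & fr S' M' (nth 0 q j.*2.+1)])) =>
  [[HeS [Hnd [q [j [Hq Hj Hf1 Hf2]]]]]|Hnot].
  have [j' [Hj' Hf1' Hf2' Hsucc]] := find_top HI Hnd HeS Hq Hj Hf1 Hf2.
  apply: (@SW_step _ _ _ _ _ (nth 0 q j'.*2)).
  - exact: qV' Hq (ltnW Hj').
  - by case/andP: Hf1'.
  - by case/andP: Hf1'.
  right; split.
    exists (nth 0 q j'.*2.+1); split.
    - exact: qV'.
    - by rewrite inE negb_or pair_ne //; case/andP: Hf2'.
    - by case/andP: Hf2'.
  move=> w Hw HwS HwM.
  case: (eqVneq w (nth 0 q j'.*2.+1)) => [->|Hwv].
    apply: IHn; last exact: inv_local.
    apply: (leq_trans (nfree_local (nth 0 q j'.*2.+1) (qV' Hq (ltnW Hj')) Hf1')).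
    by rewrite -ltnS.
  exact: force_win.
have [Hv'V Hfv' HI'] := inv_stal_move HI Hv Hfv.
apply: (@SW_step _ _ _ _ _ (mv S' M' v)).
- exact: HV'V.
- by case/andP: Hfv'.
- by case/andP: Hfv'.
case: (classic (exists u, [/\ u \in V, u \notin DA V X & nbhd_claimed a (v :: S) u])) => Hwin.
  left; apply: (simwin HI Hv Hfv) => // HeS Hnd q j Hq Hj; apply/negP => /andP [H1 H2].
  by apply: Hnot; split=> //; split=> //; exists q, j; split.
right.
case: Hor => [//|[Hex Hall]].
exact: (dom_phase Hex Hall Hwin (n := (nfree (mv S' M' v :: S') M').+1)).
Qed.

Lemma sim_staller : SWA [::] [::] -> SW' [::] [::].
Proof.
move=> H; apply: (stal_phase H (n := (nfree [::] [::]).+1)) => //.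
Qed.

End Sim.


Lemma consec_mem s u v : consec s u v -> u \in s /\ v \in s.
Proof. by move=> [i [Hi [<- <-]]]; split; apply: mem_nth => //; apply: ltnW. Qed.

Lemma consec_at (s : seq nat) k : k.+1 < size s -> consec s (nth 0 s k) (nth 0 s k.+1).
Proof. by move=> Hk; exists k. Qed.

Lemma consec_succ s u v : uniq s -> consec s u v ->
  (index u s).+1 < size s /\ v = nth 0 s (index u s).+1.
Proof.
move=> Hu [i [Hi [Eu Ev]]].
have -> : index u s = i by rewrite -Eu index_uniq // ltnW.
by [].
Qed.

Lemma consec_pred s u v : uniq s -> consec s u v ->
  [/\ 0 < index v s, index v s < size s & u = nth 0 s (index v s).-1].
Proof.
move=> Hu [i [Hi [Eu Ev]]].
have -> : index v s = i.+1 by rewrite -Ev index_uniq.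
by [].
Qed.

Section Rep.
Variables (V : seq nat) (a : nat -> nat -> Prop) (X : seq nat) (c e : nat)
  (P : seq (seq nat)) (V' : seq nat) (a' : nat -> nat -> Prop) (X' : seq nat).
Hypothesis HG : Good V a X.
Hypothesis Hce : a c e.
Hypothesis HcX : c \in X.
Hypothesis HP2 : 2 <= size P.
Hypothesis Heven : forall q, q \in P -> ~~ odd (size q).
Hypothesis Huniq : uniq (flatten P).
Hypothesis Hfresh : forall v, v \in flatten P -> v \notin V.
Hypothesis Hnil : count (fun q : seq nat => nilp q) P <= 1.
Hypothesis HV' : forall v, v \in V' <-> v \in V \/ v \in flatten P.
Hypothesis Ha' : forall u v, a' u v <->
       (a u v /\ ~ ((u = c /\ v = e) \/ (u = e /\ v = c))) \/
       exists q, q \in P /\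
         (consec (c :: q ++ [:: e]) u v \/ consec (c :: q ++ [:: e]) v u).
Hypothesis HXX' : {subset X <= X'}.
Hypothesis HX'V' : {subset X' <= V'}.
Hypothesis Hbip' : forall u v, a' u v -> (u \in X' <-> v \notin X').

Lemma Ga_sym u v : a u v -> a v u. Proof. by case: HG => H _; apply: H. Qed.
Lemma GaV u v : a u v -> u \in V /\ v \in V. Proof. by case: HG => _ [H _]; apply: H. Qed.
Lemma GXV : {subset X <= V}. Proof. by case: HG => _ [_ [H _]]. Qed.
Lemma Gbip u v : a u v -> (u \in X) = (v \notin X). Proof. by case: HG => _ [_ [_ [H _]]]; apply: H. Qed.
Lemma Gnoniso u : u \in V -> u \notin X -> exists w, a u w.
Proof. by case: HG => _ [_ [_ [_ [H _]]]]; apply: H. Qed.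
Lemma Gstal : staller_wins V a (DA V X) [::] [::].
Proof. by case: HG => _ [_ [_ [_ [_ [H _]]]]]. Qed.
Lemma Gmatch v0 : v0 \in X -> exists mt, matching V a X v0 mt.
Proof. by case: HG => _ [_ [_ [_ [_ [_ H]]]]]; apply: H. Qed.

Lemma RcV : c \in V. Proof. by case: (GaV Hce). Qed.
Lemma ReV : e \in V. Proof. by case: (GaV Hce). Qed.
Lemma ReX : e \notin X. Proof. by rewrite -(Gbip Hce). Qed.
Lemma Rce : c != e. Proof. by apply/eqP => E; move: ReX; rewrite -E HcX. Qed.

Lemma uniq_q q : q \in P -> uniq q.
Proof.
move: Huniq; elim: P => [|q0 P' IH] //=; rewrite cat_uniq => /and3P [H1 _ H3].
by rewrite inE => /orP [/eqP ->|/(IH H3)].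
Qed.

Lemma same_q q q' z : q \in P -> q' \in P -> z \in q -> z \in q' -> q = q'.
Proof.
move: Huniq; elim: P => [|q0 P' IH] //=; rewrite cat_uniq => /and3P [_ Hd H3].
have Hdis : forall y, y \in q0 -> y \in flatten P' -> False.
  move=> y Hy Hy'; move/hasPn: Hd => /(_ y Hy'); by rewrite Hy.
rewrite !inE => /orP [/eqP ->|Hq] /orP [/eqP ->|Hq'] //.
- move=> Hz Hz'; exfalso; apply: (Hdis z Hz); apply/flattenP; by exists q'.
- move=> Hz Hz'; exfalso; apply: (Hdis z Hz'); apply/flattenP; by exists q.
- exact: IH.
Qed.

Lemma Rpos q q' i i' : q \in P -> q' \in P -> i < size q -> i' < size q' ->
  nth 0 q i = nth 0 q' i' -> q = q' /\ i = i'.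
Proof.
move=> Hq Hq' Hi Hi' E.
have Eq : q = q'.
  apply: (same_q (z := nth 0 q i)) => //; first exact: mem_nth.
  by rewrite E; apply: mem_nth.
subst q'; split=> //; apply/eqP; rewrite -(nth_uniq 0 Hi Hi' (uniq_q Hq)); exact/eqP.
Qed.

Lemma RCin z : z \in flatten P -> exists q i, [/\ q \in P, i < size q & z = nth 0 q i].
Proof.
move=> /flattenP [q Hq Hz]; exists q, (index z q); split=> //; first by rewrite index_mem.
by rewrite nth_index.
Qed.

Lemma qinC q z : q \in P -> z \in q -> z \in flatten P.
Proof. by move=> Hq Hz; apply/flattenP; exists q. Qed.

Lemma Lmem q z : z \in L c e q -> [\/ z = c, z \in q | z = e].
Proof.
rewrite /L inE mem_cat inE => /orP [/eqP ->|/orP [H|/eqP ->]]; by [constructor 1|constructor 2|constructor 3].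
Qed.

Lemma L_uniq q : q \in P -> uniq (L c e q).
Proof.
move=> Hq; rewrite /L /= cat_uniq uniq_q //= andbT mem_cat inE negb_or Rce andbT.
have Hc : c \notin q by apply/negP => /(qinC Hq) /Hfresh; rewrite RcV.
have He : e \notin q by apply/negP => /(qinC Hq) /Hfresh; rewrite ReV.
by rewrite Hc orbF He.
Qed.

Lemma L_size q : size (L c e q) = (size q).+2.
Proof. by rewrite /L /= size_cat addn1. Qed.

Lemma a'_consec q k : q \in P -> k.+1 < size (L c e q) ->
  a' (nth 0 (L c e q) k) (nth 0 (L c e q) k.+1).
Proof. by move=> Hq Hk; apply/Ha'; right; exists q; split=> //; left; apply: consec_at. Qed.

Lemma a'_sym u v : a' u v -> a' v u.
Proof.
move/Ha' => [[Hauv Hn]|[q [Hq H]]]; apply/Ha'.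
  by left; split; [apply: Ga_sym | tauto].
by right; exists q; split=> //; tauto.
Qed.

Lemma a'_in u v : a' u v -> u \in V' /\ v \in V'.
Proof.
have HLV : forall q z, q \in P -> z \in L c e q -> z \in V'.
  move=> q z Hq /Lmem [->|Hz|->]; apply/HV'; [left; exact: RcV|right; exact: qinC Hz|left; exact: ReV].
move/Ha' => [[Hauv _]|[q [Hq [H|H]]]].
- by case: (GaV Hauv) => H1 H2; split; apply/HV'; left.
- by case: (consec_mem H) => H1 H2; split; apply: HLV Hq _.
- by case: (consec_mem H) => H1 H2; split; apply: HLV Hq _.
Qed.

Lemma LX' q k : q \in P -> k <= (size q).+1 -> (nth 0 (L c e q) k \in X') = ~~ odd k.
Proof.
move=> Hq; elim: k => [|k IH] Hk; first by rewrite /= HXX'.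
have Hedge := a'_consec Hq (k := k); rewrite L_size in Hedge.
have := Hbip' (Hedge ltac:(by [])) => Hiff.
rewrite /= -IH; last by apply: ltnW.
case: (boolP (nth 0 (L c e q) k \in X')) => Hx /=.
  by rewrite (negbTE (proj1 Hiff Hx)).
by apply/negPn/negP => Hy; move/negP: Hx; apply; apply/Hiff.
Qed.

Lemma Lnth_q q k : 0 < k -> k <= size q -> nth 0 (L c e q) k = nth 0 q k.-1.
Proof. by case: k => // k _ Hk; rewrite /L /= nth_cat Hk. Qed.

Lemma Lnth_last q : nth 0 (L c e q) (size q).+1 = e.
Proof. by rewrite /L /= nth_cat ltnn subnn. Qed.

Lemma index_L q i : q \in P -> i < size q -> index (nth 0 q i) (L c e q) = i.+1.
Proof.
move=> Hq Hi; rewrite -(Lnth_q (k := i.+1)) //.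
apply: index_uniq; last exact: L_uniq.
by rewrite L_size ltnS ltnW.
Qed.

Lemma q_notV q i : q \in P -> i < size q -> nth 0 q i \notin V.
Proof. by move=> Hq Hi; apply: Hfresh; apply: (qinC Hq); apply: mem_nth. Qed.

Lemma RF2 u w : u \in V -> u != c -> u != e -> a' u w -> a u w.
Proof.
move=> Hu Huc Hue /Ha' [[H _]//|[q [Hq H]]].
have Hu' : u \in L c e q by case: H => /consec_mem [].
case/Lmem: Hu' => [E|Hin|E].
- by move: Huc; rewrite E eqxx.
- by move: (Hfresh (qinC Hq Hin)); rewrite Hu.
- by move: Hue; rewrite E eqxx.
Qed.

Lemma RF3 w : a' c w ->
  (a c w /\ w != e) \/ w = e \/ exists q, [/\ q \in P, 0 < size q & w = nth 0 q 0].
Proof.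
move/Ha' => [[H Hn]|[q [Hq [H|H]]]].
- by left; split=> //; apply/eqP => E; apply: Hn; left.
- have [_ ->] := consec_succ (L_uniq Hq) H.
  rewrite /L /= eqxx /=; case: q Hq {H} => [|x q] Hq /=; first by right; left.
  by right; right; exists (x :: q).
- have [H0 _ _] := consec_pred (L_uniq Hq) H.
  by move: H0; rewrite /L /= eqxx.
Qed.

Lemma RF4 q i w : q \in P -> i < size q -> a' (nth 0 q i) w ->
  w = nth 0 (L c e q) i \/ w = nth 0 (L c e q) i.+2.
Proof.
move=> Hq Hi /Ha' [[H _]|[q' [Hq' H]]].
  by case: (GaV H) => Hu _; move: (q_notV Hq Hi); rewrite Hu.
have Hnin : nth 0 q i \in q by apply: mem_nth.
have Hq'q : nth 0 q i \in L c e q' -> q' = q.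
  case/Lmem => [E|Hin|E].
  - by move: (q_notV Hq Hi); rewrite E RcV.
  - exact: (same_q Hq' Hq Hin Hnin).
  - by move: (q_notV Hq Hi); rewrite E ReV.
case: H => H.
  have Eq := Hq'q (proj1 (consec_mem H)); subst q'.
  have [_ ->] := consec_succ (L_uniq Hq) H.
  by right; rewrite index_L.
have Eq := Hq'q (proj2 (consec_mem H)); subst q'.
have [_ _ ->] := consec_pred (L_uniq Hq) H.
by left; rewrite index_L.
Qed.

Lemma RF5 q i : q \in P -> i < size q -> (nth 0 q i \in X') = odd i.
Proof.
move=> Hq Hi; rewrite -(Lnth_q (k := i.+1)) // LX' //=; first by rewrite negbK.
by apply: leq_trans Hi _.
Qed.

Lemma RP0 : exists q, q \in P.
Proof. by case: P HP2 => [|q P'] // _; exists q; rewrite mem_head. Qed.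

Lemma ReX' : e \notin X'.
Proof.
have [q Hq] := RP0.
by rewrite -(Lnth_last q) LX' //= negbK (negbTE (Heven Hq)).
Qed.

Lemma Rold_X u : u \in V -> u \in X' -> u \in X.
Proof.
move=> Hu HuX'; apply: NNPP => /negP HuX.
case: (eqVneq u e) => [E|Hue]; first by move: ReX'; rewrite -E HuX'.
have [w Haw] := Gnoniso Hu HuX.
have Huc : u != c by apply/eqP => E; move: HuX; rewrite E HcX.
have Ha'w : a' u w.
  apply/Ha'; left; split=> //; move=> [[E _]|[E _]]; [move: Huc|move: Hue]; by rewrite E eqxx.
have HwX : w \in X by move: (Gbip Haw); rewrite (negbTE HuX) => /esym/negbFE.
have := proj1 (Hbip' Ha'w) HuX'; by rewrite HXX'.
Qed.

Lemma Rnoniso u : u \in V' -> u \notin X' -> exists w, a' u w.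
Proof.
move=> /HV' [Hu|Hu] HuX'.
  have HuX : u \notin X by apply/negP => /HXX'; rewrite (negbTE HuX').
  case: (eqVneq u e) => [->|Hue].
    have [q Hq] := RP0.
    exists (nth 0 (L c e q) (size q)); apply: a'_sym.
    have H := @a'_consec q (size q) Hq; rewrite Lnth_last L_size in H; exact: H.
  have [w Haw] := Gnoniso Hu HuX.
  have Huc : u != c by apply/eqP => E; move: HuX; rewrite E HcX.
  exists w; apply/Ha'; left; split=> //; move=> [[E _]|[E _]]; [move: Huc|move: Hue]; by rewrite E eqxx.
have [q [i [Hq Hi ->]]] := RCin Hu.
exists (nth 0 (L c e q) i); apply: a'_sym.
have H := @a'_consec q i Hq; rewrite (Lnth_q (k := i.+1)) // L_size in H.
by apply: H; rewrite ltnS ltnW.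
Qed.

Lemma Rstal : staller_wins V' a' (DA V' X') [::] [::].
Proof.
apply: (sim_staller (c := c) (e := e) (P := P) (V := V) (a := a) (X := X)).
- exact: GaV.
- exact: Gbip.
- exact: Hce.
- exact: HcX.
- by move=> v Hv; apply/HV'; left.
- by move=> v Hv; apply/HV'; right.
- by move=> v /HV'.
- exact: Hfresh.
- exact: Rpos.
- exact: RCin.
- exact: Heven.
- exact: HXX'.
- exact: RF2.
- exact: RF3.
- exact: RF4.
- exact: RF5.
- exact: Gstal.
Qed.

Lemma L_class q k : q \in P -> k <= (size q).+1 ->
  [\/ k = 0 /\ nth 0 (L c e q) k = c,
      0 < k <= size q /\ nth 0 (L c e q) k \in flatten P |
      k = (size q).+1 /\ nth 0 (L c e q) k = e].
Proof.
move=> Hq Hk; case: k Hk => [|k] Hk; first by constructor 1.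
case: (ltngtP k (size q)) => Hks.
- constructor 2; split=> //; rewrite Lnth_q //= ?ltnW //.
  by apply: (qinC Hq); apply: mem_nth.
- by move: Hk; rewrite ltnS leqNgt Hks.
- by constructor 3; rewrite Hks Lnth_last.
Qed.

Lemma L_eqg q q' k k' : q \in P -> q' \in P -> k <= (size q).+1 -> k' <= (size q').+1 ->
  nth 0 (L c e q) k = nth 0 (L c e q') k' ->
  [\/ q = q' /\ k = k', k = 0 /\ k' = 0 | k = (size q).+1 /\ k' = (size q').+1].
Proof.
move=> Hq Hq' Hk Hk' E.
have HcC : c \notin flatten P by apply/negP => /Hfresh; rewrite RcV.
have HeC : e \notin flatten P by apply/negP => /Hfresh; rewrite ReV.
have Hce' := Rce.
case: (L_class Hq Hk) => [[H1 H2]|[H1 H2]|[H1 H2]];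
case: (L_class Hq' Hk') => [[H1' H2']|[H1' H2']|[H1' H2']].
- by constructor 2.
- by move: H2'; rewrite -E H2 (negbTE HcC).
- by move: Hce'; rewrite -H2' -E H2 eqxx.
- by move: H2; rewrite E H2' (negbTE HcC).
- constructor 1.
  case/andP: H1 => A1 B1; case/andP: H1' => A1' B1'.
  case: k A1 B1 E {Hk H2} => // k _ B1; case: k' A1' B1' {Hk' H2'} => // k' _ B1'.
  rewrite !Lnth_q //= => E.
  by have [-> ->] := Rpos Hq Hq' B1 B1' E.
- by move: H2; rewrite E H2' (negbTE HeC).
- by move: Hce'; rewrite -H2 E H2' eqxx.
- by move: H2'; rewrite -E H2 (negbTE HeC).
- by constructor 3.
Qed.

Definition chR q0 l0 (u d : nat) := exists q l, [/\ q \in P, l.*2 <= size q,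
  u = nth 0 (L c e q) l.*2 &
  (q = q0 /\ l < l0 /\ d = nth 0 (L c e q) l.*2.+1) \/
  ((q != q0 \/ l0 < l) /\ 0 < l /\ d = nth 0 (L c e q) l.*2.-1)].

Lemma chR_inv q0 l0 u d : chR q0 l0 u d -> exists q l k, [/\ q \in P, l.*2 <= size q,
  u = nth 0 (L c e q) l.*2, d = nth 0 (L c e q) k &
  [/\ 0 < k, k <= (size q).+1 &
  (q = q0 /\ l < l0 /\ k = l.*2.+1) \/ ((q != q0 \/ l0 < l) /\ 0 < l /\ k = l.*2.-1)]].
Proof.
move=> [q [l [Hq Hl Hu [[Hq0 [Hll0 Hd]]|[Hne [Hl0 Hd]]]]]].
  exists q, l, l.*2.+1; split=> //; split; [by []|by rewrite ltnS|by left].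
exists q, l, l.*2.-1; split=> //; split; [by move: Hl0; clear; lia|by move: Hl; clear; lia|by right].
Qed.

Lemma chR_edge q0 l0 u d : chR q0 l0 u d -> a' u d /\ u \in X'.
Proof.
move=> [q [l [Hq Hl -> H]]].
have HX : nth 0 (L c e q) l.*2 \in X' by rewrite LX' ?odd_double //; apply: leqW.
split=> //.
case: H => [[_ [_ ->]]|[_ [Hl0 ->]]].
  by apply: a'_consec => //; rewrite L_size !ltnS.
apply: a'_sym.
have E : (l.*2.-1).+1 = l.*2 by move: Hl0; clear; lia.
have := @a'_consec q l.*2.-1 Hq; rewrite E; apply.
by rewrite L_size ltnS leqW.
Qed.

Lemma chR_fun q0 l0 u d d' : chR q0 l0 u d -> chR q0 l0 u d' -> d = d'.
Proof.
move=> [q [l [Hq Hl Hu H]]] [q' [l' [Hq' Hl' Hu' H']]].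
have := L_eqg Hq Hq' (leqW Hl) (leqW Hl') (etrans (esym Hu) Hu').
case=> [[Eq El]|[El El']|[El _]].
- subst q'; have {}El : l = l' by move: El; clear; lia.
  subst l'.
  case: H => [[Eq [Hl0 ->]]|[Hne [Hl0 ->]]];
  case: H' => [[Eq' [Hl0' ->]]|[Hne' [Hl0' ->]]] //.
  + by case: Hne' => [/eqP|]; [|move: Hl0; clear; lia].
  + by case: Hne => [/eqP|]; [|move: Hl0'; clear; lia].
- have l0' : l = 0 by move: El; clear; lia.
  have l0'' : l' = 0 by move: El'; clear; lia.
  subst l l'.
  case: H => [[Eq [_ ->]]|[_ [//]]]; case: H' => [[Eq' [_ ->]]|[_ [//]]].
  by rewrite Eq Eq'.
- by move: Hl El; clear; lia.
Qed.

Lemma chR_inj q0 l0 u u' d : chR q0 l0 u d -> chR q0 l0 u' d -> u = u'.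
Proof.
move=> /chR_inv [q [l [k [Hq Hl -> Hd [Hk0 Hk H]]]]]
       /chR_inv [q' [l' [k' [Hq' Hl' -> Hd' [Hk0' Hk' H']]]]].
have Eqk : q = q' /\ k = k'.
  case: (L_eqg Hq Hq' Hk Hk' (etrans (esym Hd) Hd')) => [//|[E _]|[E E']].
    by move: Hk0; rewrite E.
  have Hs : forall q1 l1 k1, l1.*2 <= size q1 -> k1 = (size q1).+1 ->
      (q1 = q0 /\ l1 < l0 /\ k1 = l1.*2.+1) \/ ((q1 != q0 \/ l0 < l1) /\ 0 < l1 /\ k1 = l1.*2.-1) ->
      q1 = q0.
    move=> q1 l1 k1 Hl1 ->; case=> [[->]|[_ [Hp Hk1]]] //.
    by move: Hl1 Hp Hk1; clear; lia.
  have Eq1 := Hs _ _ _ Hl E H; have Eq2 := Hs _ _ _ Hl' E' H'.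
  by split; [rewrite Eq1 Eq2|rewrite E E' Eq1 Eq2].
case: Eqk => Eq Ek; subst q' k'.
suff -> : l = l' by [].
case: H => [[Eq [Hl0 Ek]]|[Hne [Hl0 Ek]]];
case: H' => [[Eq' [Hl0' Ek']]|[Hne' [Hl0' Ek']]].
- by move: Ek Ek'; clear; lia.
- case: Hne' => [/eqP//|Hlt]. by move: Ek Ek' Hl0 Hlt Hl0'; clear; lia.
- case: Hne => [/eqP//|Hlt]. by move: Ek Ek' Hl0' Hlt Hl0; clear; lia.
- by move: Ek Ek' Hl0 Hl0'; clear; lia.
Qed.

Section ChainMatch.
Variables (mt0 : nat -> nat -> Prop) (q0 : seq nat) (l0 v0 : nat).
Hypothesis Hq0 : q0 \in P.
Hypothesis H1 : forall u d, mt0 u d -> [/\ a u d, u \in X, u \in V & d \in V].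
Hypothesis H2 : forall u d d', mt0 u d -> mt0 u d' -> d = d'.
Hypothesis H3 : forall u u' d, mt0 u d -> mt0 u' d -> u = u'.
Hypothesis H4 : ~ mt0 c e.
Hypothesis H5 : 0 < l0 -> forall d, ~ mt0 c d.
Hypothesis H6 : size q0 < l0.*2 -> forall u, ~ mt0 u e.
Hypothesis H7 : forall u, u \in X -> u != v0 -> (u != c \/ l0 = 0) -> exists d, mt0 u d.
Hypothesis H8 : forall l, 0 < l -> l.*2 <= size q0 -> l = l0 -> nth 0 (L c e q0) l.*2 = v0.

Lemma mix_u u d d' : mt0 u d -> chR q0 l0 u d' -> False.
Proof.
move=> Hm /chR_inv [q [l [k [Hq Hl Hu Hd [Hk0 Hk H]]]]].
have [_ _ HuV _] := H1 Hm.
case: (L_class Hq (leqW Hl)) => [[El Ec]|[_ Hin]|[El _]].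
- have El0 : l = 0 by move: El; clear; lia.
  subst l; case: H => [[_ [Hl0 _]]|[_ [//]]].
  by apply: (H5 Hl0 (d := d)); rewrite -Ec -Hu.
- by move: (Hfresh Hin); rewrite -Hu HuV.
- by move: Hl El; clear; lia.
Qed.

Lemma mix_d u u' d : mt0 u d -> chR q0 l0 u' d -> False.
Proof.
move=> Hm /chR_inv [q [l [k [Hq Hl Hu Hd [Hk0 Hk H]]]]].
have [_ _ _ HdV] := H1 Hm.
case: (L_class Hq Hk) => [[Ek _]|[_ Hin]|[Ek Ee]].
- by move: Hk0; rewrite Ek.
- by move: (Hfresh Hin); rewrite -Hd HdV.
- case: H => [[Eq [Hll0 Ek']]|[_ [_ Ek']]].
    subst q; apply: (H6 _ (u := u)); last by rewrite -Ee -Hd.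
    have Hs : size q0 = l.*2 by apply/eqP; rewrite -eqSS -Ek Ek'.
    by rewrite Hs ltn_double.
  have Hs : (size q).+1 = l.*2.-1 by rewrite -Ek Ek'.
  move: Hl; rewrite leqNgt; move/negP; apply; rewrite -ltnS Hs.
  by case: (l.*2) Hs => //= n; rewrite ltnSn.
Qed.

Lemma chain_matching : matching V' a' X' v0 (fun u d => mt0 u d \/ chR q0 l0 u d).
Proof.
split.
- move=> u d [H|H].
    have [Ha HuX HuV HdV] := H1 H.
    split.
    + apply/Ha'; left; split=> //; case=> [[E1 E2]|[E1 E2]].
        by subst; apply: H4.
      by move: HuX; rewrite E1 (negbTE ReX).
    + exact: HXX'.
    + by apply/HV'; left.
    + by apply/HV'; left.
  have [Ha'' HuX'] := chR_edge H; have [HuV' HdV'] := a'_in Ha''; by split.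
- move=> u d d' [H|H] [H'|H'].
  + exact: H2 H H'.
  + by case: (mix_u H H').
  + by case: (mix_u H' H).
  + exact: chR_fun H H'.
- move=> u u' d [H|H] [H'|H'].
  + exact: H3 H H'.
  + by case: (mix_d H H').
  + by case: (mix_d H' H).
  + exact: chR_inj H H'.
move=> u HuX' Huv0.
case: (proj1 (HV' u) (HX'V' HuX')) => [HuV|HuC].
  have HuX := Rold_X HuV HuX'.
  case: (eqVneq u c) => [Euc|Huc].
    case: (posnP l0) => [El0|Hl0].
      by have [d Hd] := H7 HuX Huv0 (or_intror El0); exists d; left.
    exists (nth 0 (L c e q0) 1); right; exists q0, 0; split=> //.
    by left.
  by have [d Hd] := H7 HuX Huv0 (or_introl Huc); exists d; left.
have [q [i [Hq Hi Eu]]] := RCin HuC.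
have Hodd : odd i by rewrite -(RF5 Hq Hi) -Eu.
set l := (i.+1)./2.
have El : l.*2 = i.+1.
  by rewrite -[RHS](odd_double_half i.+1) /= Hodd.
have Hl : l.*2 <= size q by rewrite El.
have Hl0' : 0 < l by move: El; clear; lia.
have Eu' : u = nth 0 (L c e q) l.*2 by rewrite El Lnth_q.
case: (eqVneq q q0) => [Eq|Hne].
  case: (ltngtP l l0) => [Hlt|Hgt|Heq].
  - exists (nth 0 (L c e q) l.*2.+1); right; exists q, l; split=> //.
    by left.
  - exists (nth 0 (L c e q) l.*2.-1); right; exists q, l; split=> //.
    by right; split=> //; right.
  - exfalso; move: Huv0; rewrite Eu' Eq H8 ?eqxx //.
    by rewrite -Eq.
exists (nth 0 (L c e q) l.*2.-1); right; exists q, l; split=> //.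
by right; split=> //; left.
Qed.
End ChainMatch.

Lemma half_lt n : n < (n./2).+1.*2.
Proof.
rewrite doubleS -{1}(odd_double_half n); case: (odd n) => /=; lia.
Qed.

Lemma Rmatch v0 : v0 \in X' -> exists mt, matching V' a' X' v0 mt.
Proof.
move=> Hv0; have [q0 Hq0] := RP0.
case: (proj1 (HV' v0) (HX'V' Hv0)) => [Hv0V|Hv0C].
  have Hv0X := Rold_X Hv0V Hv0.
  have [mt [M1 M2 M3 M4]] := Gmatch Hv0X.
  case: (classic (mt c e)) => Hmce.
    exists (fun u d => (mt u d /\ u != c) \/ chR q0 (size q0)./2.+1 u d).
    apply: (chain_matching (mt0 := fun u d => mt u d /\ u != c)) => //.
    - by move=> u d [/M1].
    - by move=> u d d' [H _] [H' _]; apply: M2 H H'.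
    - by move=> u u' d [H _] [H' _]; apply: M3 H H'.
    - by move=> [_]; rewrite eqxx.
    - by move=> _ d [_]; rewrite eqxx.
    - move=> _ u [H Huc]; have := M3 _ _ _ H Hmce; move=> E; by move: Huc; rewrite E eqxx.
    - move=> u HuX Huv [Huc|//].
      by have [d Hd] := M4 u HuX Huv; exists d.
    - move=> l _ Hl El; subst l; have := half_lt (size q0).
      by rewrite ltnNge Hl.
  exists (fun u d => mt u d \/ chR q0 0 u d).
  apply: (chain_matching (mt0 := mt)) => //.
  - move=> u HuX Huv _; exact: M4.
  - by move=> l Hl _ El; move: Hl; rewrite El.
have [q [i [Hq Hi Ev0]]] := RCin Hv0C.
have Hodd : odd i by rewrite -(RF5 Hq Hi) -Ev0.
have [mt [M1 M2 M3 M4]] := Gmatch HcX.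
set l0 := (i.+1)./2.
have El : l0.*2 = i.+1.
  by rewrite -[RHS](odd_double_half i.+1) /= Hodd.
exists (fun u d => (mt u d /\ u != c) \/ chR q l0 u d).
apply: (chain_matching (mt0 := fun u d => mt u d /\ u != c)) => //.
- by move=> u d [/M1].
- by move=> u d d' [H _] [H' _]; apply: M2 H H'.
- by move=> u u' d [H _] [H' _]; apply: M3 H H'.
- by move=> [_]; rewrite eqxx.
- by move=> _ d [_]; rewrite eqxx.
- by move=> Hlt; move: Hlt; rewrite El ltnNge Hi.
- move=> u HuX Huv [Huc|El0].
    by have [d Hd] := M4 u HuX Huc; exists d.
  by move: El; rewrite El0.
- by move=> l _ _ ->; rewrite El Lnth_q.
Qed.

Lemma RGood : Good V' a' X'.
Proof.
split; first exact: a'_sym.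
split; first exact: a'_in.
split; first exact: HX'V'.
split.
  move=> u v H; apply/idP/idP; first exact: (proj1 (Hbip' H)).
  exact: (proj2 (Hbip' H)).
split; first exact: Rnoniso.
split; first exact: Rstal.
exact: Rmatch.
Qed.

End Rep.


Lemma consec_rev1 (s : seq nat) u v : consec (rev s) u v -> consec s v u.
Proof.
move=> [i [Hi [Eu Ev]]]; rewrite size_rev in Hi.
exists (size s - i.+2); split.
  by move: Hi; clear; lia.
rewrite !nth_rev ?size_rev in Eu Ev; try (move: Hi; clear; lia).
split.
  by rewrite -Ev; congr nth; move: Hi; clear; lia.
by rewrite -Eu; congr nth; move: Hi; clear; lia.
Qed.

Lemma consec_rev (s : seq nat) u v : consec (rev s) u v <-> consec s v u.
Proof.
split; first exact: consec_rev1.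
by move=> H; apply: consec_rev1; rewrite revK.
Qed.

Lemma rev_path (x y : nat) q : rev (x :: q ++ [:: y]) = y :: rev q ++ [:: x].
Proof. by rewrite rev_cons rev_cat /= -cats1. Qed.

Lemma mem_flatten_rev (P : seq (seq nat)) v : (v \in flatten (map rev P)) = (v \in flatten P).
Proof. by elim: P => [|q P IH] //=; rewrite !mem_cat mem_rev IH. Qed.

Lemma uniq_flatten_rev (P : seq (seq nat)) : uniq (flatten (map rev P)) = uniq (flatten P).
Proof.
elim: P => [|q P IH] //=; rewrite !cat_uniq rev_uniq IH; congr (_ && (_ && _)).
congr negb; rewrite (eq_has_r (mem_flatten_rev P)).
by apply: eq_has => z; rewrite /= mem_rev.
Qed.

Lemma inA_good V a X : inA V a X -> Good V a X.
Proof.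
elim=> {V a X}.
  move=> U t m V a X Ht Hms HmU Hmi HV Ha HX.
  exact: (sub_good Ht Hms HmU Hmi HV Ha HX).
move=> V a X x y P V' a' X' _ HG Hxy HP2 Heven Huniq Hfresh Hnil HV' Ha' HXX' HX'V' Hbip'.
case: (boolP (x \in X)) => HxX.
  exact: (RGood HG Hxy HxX HP2 Heven Huniq Hfresh Hnil HV' Ha' HXX' HX'V' Hbip').
have HyX : y \in X by move: (Gbip HG Hxy); rewrite (negbTE HxX) => /esym/negbFE.
apply: (RGood (c := y) (e := x) (P := map rev P) HG).
- exact: (Ga_sym HG Hxy).
- exact: HyX.
- by rewrite size_map.
- by move=> q /mapP [q0 Hq0 ->]; rewrite size_rev; apply: Heven.
- by rewrite uniq_flatten_rev.
- by move=> v; rewrite mem_flatten_rev; apply: Hfresh.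
- by rewrite count_map; apply: leq_trans Hnil; apply: sub_count => q /=; rewrite /nilp size_rev.
- by move=> v; rewrite mem_flatten_rev; apply: HV'.
- move=> u v; rewrite Ha'; split.
    case=> [[H1 H2]|[q [Hq H]]].
      by left; split=> //; tauto.
    right; exists (rev q); split; first by apply: map_f.
    by rewrite -rev_path !consec_rev; tauto.
  case=> [[H1 H2]|[q [/mapP [q0 Hq0 ->] H]]].
    by left; split=> //; tauto.
  right; exists q0; split=> //.
  by move: H; rewrite -rev_path !consec_rev; tauto.
- exact: HXX'.
- exact: HX'V'.
- exact: Hbip'.
Qed.

Theorem theorem6p2 (V : seq nat) (a : nat -> nat -> Prop) (X : seq nat) :
  inA V a X -> atomic_MBD_critical V a [seq v <- V | v \notin X].
Proof.
move=> H; have [Hsym [Hin [HXV [Hbip [Hnon [Hst Hmat]]]]]] := inA_good H.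
have HD : forall u, (u \in [seq v <- V | v \notin X]) = (u \in V) && (u \notin X).
  by move=> u; rewrite mem_filter andbC.
split.
- split; first exact: Hst.
  move=> v Hv HvD; rewrite HD Hv /= negbK in HvD.
  have [mt [M1 M2 M3 M4]] := Hmat v HvD.
  apply: (pairing_dom (pr := fun p q => mt p q \/ mt q p)).
  + by move=> p q [H1|H1]; [right|left].
  + move=> p q q' [H1|H1] [H2|H2].
    * exact: M2 H1 H2.
    * have [_ HpX _ _] := M1 _ _ H1; have [Ha2 _ _ _] := M1 _ _ H2.
      have [_ Hq'X _ _] := M1 _ _ H2.
      by move: (Hbip _ _ Ha2); rewrite Hq'X HpX.
    * have [_ HpX _ _] := M1 _ _ H2; have [Ha1 Hq X1 _] := M1 _ _ H1.
      by move: (Hbip _ _ Ha1); rewrite Hq HpX.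
    * exact: M3 H1 H2.
  + move=> p q [H1|H1].
      have [Ha1 HpX _ HqV] := M1 _ _ H1; split=> // E; subst q.
      by move: (Hbip _ _ Ha1); rewrite HpX.
    have [Ha1 HqX HqV _] := M1 _ _ H1; split=> // E; subst q.
    by move: (Hbip _ _ Ha1); rewrite HqX.
  + move=> u Hu; rewrite inE negb_or HD Hu /= negbK => /andP [Huv HuX].
    have [d Hd] := M4 u HuX Huv.
    exists u, d; split; [by left | by left | right].
    by case: (M1 _ _ Hd).
- move=> u v; rewrite !HD => /andP [_ HuX] /andP [_ HvX] Huv.
  by move: (Hbip _ _ Huv); rewrite (negbTE HuX) HvX.
- move=> u; rewrite HD => /andP [Hu HuX]; exact: Hnon.
Qed.
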